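(* Let $f$ be a Brouwer-mapping function with complexity parameter $n$ (computed by a Brouwer-mapping circuit). Then $f$ can be implemented by a linear arithmetic circuit having $\mathrm{poly}(n)$ gates that computes a continuous function $K\to K$, where $K=[0,1]^3$.
   Context: For $n\in\mathbb{N}$, $K=[0,1]^3$ is partitioned into $2^{3n}$ cubelets $K_{ijk}$, $0\le i,j,k\le 2^n-1$, where $K_{ijk}$ is the axis-aligned cube of side $2^{-n}$ with vertex closest to the origin $2^{-n}(i,j,k)$. A Brouwer-mapping circuit with parameter $n$ is a Boolean circuit with $3n$ inputs and $2$ outputs; it defines a Brouwer-mapping function $f$ mapping each cubelet to a color in $\{0,1,2,3\}$, with exterior cubelets (some index equal to $0$ or $2^n-1$) colored as follows: color $1$ if $i=0$; color $2$ if $j=0,i>0$; color $3$ if $k=0$, $i,j>0$; color $0$ otherwise. A linear arithmetic circuit is a directed acyclic circuit computing a function $K\to K$ (three input nodes, three output nodes) whose gates each take $0$, $1$ or $2$ inputs in $[0,1]$ and output a value in $[0,1]$: the sum, difference, max or min of two inputs, a constant multiple of one input, or a constant; results are truncated to $[0,1]$ (e.g. a sum exceeding $1$ outputs $1$). Comparator gates are also allowed: output $1$ if the first input exceeds the second, $0$ if it is smaller, and any value if they are equal. Let $\alpha=2^{-2n}$, $\delta_1=(\alpha,0,0)$, $\delta_2=(0,\alpha,0)$, $\delta_3=(0,0,\alpha)$, $\delta_0=(-\alpha,-\alpha,-\alpha)$. A circuit $C$ computing a function $K\to K$ implements $f$ if: whenever $f(K_{ijk})=c$ and $x$ is the center of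 $K_{ijk}$, $C(x)-x=\delta_c$; and for $x$ not a cubelet center, $C(x)-x$ is a convex combination of the vectors $C(z)-z$ over cubelet centers $z$ within $L_\infty$ distance $2^{-n}$ of $x$. *)

(* Defs.v *)
From Stdlib Require Import Reals List Lia.
Import ListNotations.
Open Scope R_scope.

(* Gate at position p may only reference gates at positions < p (acyclic). *)
Inductive bgate : Type :=
  | BIn (k : nat)
  | BConst (b : bool)
  | BNot (i : nat)
  | BAnd (i j : nat)
  | BOr (i j : nat).

Record bcircuit : Type := {
  bgates : list bgate;
  bout0 : nat;
  bout1 : nat
}.

Definition bgate_wf (m p : nat) (g : bgate) : Prop :=
  match g with
  | BIn k => (k < m)%nat
  | BConst _ => True
  | BNot i => (i < p)%nat
  | BAnd i j | BOr i j => (i < p)%nat /\ (j < p)%nat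
  end.

Definition bcircuit_wf (m : nat) (B : bcircuit) : Prop :=
  (forall p g, nth_error (bgates B) p = Some g -> bgate_wf m p g) /\
  (bout0 B < length (bgates B))%nat /\ (bout1 B < length (bgates B))%nat.

Definition bgate_val (inp : nat -> bool) (acc : list bool) (g : bgate) : bool :=
  match g with
  | BIn k => inp k
  | BConst b => b
  | BNot i => negb (nth i acc false)
  | BAnd i j => andb (nth i acc false) (nth j acc false)
  | BOr i j => orb (nth i acc false) (nth j acc false)
  end.

Fixpoint beval_aux (inp : nat -> bool) (gs : list bgate) (acc : list bool)
  : list bool :=
  match gs with
  | [] => acc
  | g :: gs' => beval_aux inp gs' (acc ++ [bgate_val inp acc g])
  end.

(* Input encoding of the cubelet index (i,j,k): inputs 0..n-1 are the bits
   of i (least significant first), n..2n-1 those of j, 2n..3n-1 those of k. *)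
Definition cube_input (n i j k : nat) (t : nat) : bool :=
  if (t <? n)%nat then Nat.testbit i t
  else if (t <? 2 * n)%nat then Nat.testbit j (t - n)
  else Nat.testbit k (t - 2 * n).

Definition bcolor (B : bcircuit) (n i j k : nat) : nat :=
  let v := beval_aux (cube_input n i j k) (bgates B) [] in
  (2 * Nat.b2n (nth (bout0 B) v false) + Nat.b2n (nth (bout1 B) v false))%nat.

Definition brouwer_f (B : bcircuit) (n i j k : nat) : nat :=
  let M := (2 ^ n - 1)%nat in
  if (i =? 0)%nat then 1%nat
  else if (j =? 0)%nat then 2%nat
  else if (k =? 0)%nat then 3%nat
  else if orb (orb (i =? M)%nat (j =? M)%nat) (k =? M)%nat then 0%nat
  else bcolor B n i j k.

Definition pt : Type := (R * R * R)%type.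
Definition cx (x : pt) : R := fst (fst x).
Definition cy (x : pt) : R := snd (fst x).
Definition cz (x : pt) : R := snd x.
Definition coord (x : pt) (d : nat) : R :=
  match d with 0%nat => cx x | 1%nat => cy x | _ => cz x end.

Definition vadd (x y : pt) : pt := (cx x + cx y, cy x + cy y, cz x + cz y).
Definition vsub (x y : pt) : pt := (cx x - cx y, cy x - cy y, cz x - cz y).
Definition vscale (a : R) (x : pt) : pt := (a * cx x, a * cy x, a * cz x).
Definition vzero : pt := (0, 0, 0).

Definition dist_inf (x y : pt) : R :=
  Rmax (Rabs (cx x - cx y)) (Rmax (Rabs (cy x - cy y)) (Rabs (cz x - cz y))).

Definition inK (x : pt) : Prop :=
  0 <= cx x <= 1 /\ 0 <= cy x <= 1 /\ 0 <= cz x <= 1.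

Definition continuous_on_K (F : pt -> pt) : Prop :=
  forall x, inK x -> forall eps, 0 < eps ->
    exists delta, 0 < delta /\
      forall y, inK y -> dist_inf y x < delta -> dist_inf (F y) (F x) < eps.

Definition center (n i j k : nat) : pt :=
  ((INR i + / 2) / 2 ^ n, (INR j + / 2) / 2 ^ n, (INR k + / 2) / 2 ^ n).

Definition is_center (n : nat) (z : pt) : Prop :=
  exists i j k, (i < 2 ^ n)%nat /\ (j < 2 ^ n)%nat /\ (k < 2 ^ n)%nat /\
    z = center n i j k.

Definition alpha (n : nat) : R := / 2 ^ (2 * n).

Definition delta_col (n : nat) (c : nat) : pt :=
  match c with
  | 1%nat => (alpha n, 0, 0)
  | 2%nat => (0, alpha n, 0)
  | 3%nat => (0, 0, alpha n)
  | _ => (- alpha n, - alpha n, - alpha n)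
  end.

Definition implements (B : bcircuit) (n : nat) (F : pt -> pt) : Prop :=
  (forall i j k, (i < 2 ^ n)%nat -> (j < 2 ^ n)%nat -> (k < 2 ^ n)%nat ->
     vsub (F (center n i j k)) (center n i j k) = delta_col n (brouwer_f B n i j k)) /\
  (forall x, inK x -> ~ is_center n x ->
     exists l : list (R * pt),
       (forall w z, In (w, z) l ->
          0 <= w /\ is_center n z /\ dist_inf z x <= / 2 ^ n) /\
       fold_right (fun wz s => fst wz + s) 0 l = 1 /\
       vsub (F x) x =
         fold_right (fun wz s => vadd (vscale (fst wz) (vsub (F (snd wz)) (snd wz))) s)
                    vzero l).

Inductive lgate : Type :=
  | LIn (d : nat)
  | LConst (c : R)
  | LAdd (i j : nat)
  | LSub (i j : nat)
  | LMax (i j : nat)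
  | LMin (i j : nat)
  | LScale (c : R) (i : nat)
  | LCmp (i j : nat).

Record lcircuit : Type := {
  lgates : list lgate;
  lout0 : nat; lout1 : nat; lout2 : nat
}.

Definition lgate_wf (p : nat) (g : lgate) : Prop :=
  match g with
  | LIn d => (d < 3)%nat
  | LConst _ => True
  | LAdd i j | LSub i j | LMax i j | LMin i j | LCmp i j =>
      (i < p)%nat /\ (j < p)%nat
  | LScale _ i => (i < p)%nat
  end.

Definition lcircuit_wf (C : lcircuit) : Prop :=
  (forall p g, nth_error (lgates C) p = Some g -> lgate_wf p g) /\
  (lout0 C < length (lgates C))%nat /\ (lout1 C < length (lgates C))%nat /\
  (lout2 C < length (lgates C))%nat.

Definition trunc01 (x : R) : R := Rmax 0 (Rmin 1 x).

Definition lgate_ok (x : pt) (vals : list R) (g : lgate) (v : R) : Prop :=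
  let val i := nth i vals 0 in
  match g with
  | LIn d => v = coord x d
  | LConst c => v = trunc01 c
  | LAdd i j => v = trunc01 (val i + val j)
  | LSub i j => v = trunc01 (val i - val j)
  | LMax i j => v = trunc01 (Rmax (val i) (val j))
  | LMin i j => v = trunc01 (Rmin (val i) (val j))
  | LScale c i => v = trunc01 (c * val i)
  | LCmp i j => (val i > val j -> v = 1) /\ (val i < val j -> v = 0) /\ 0 <= v <= 1
  end.

(* vals is a valid (possibly nondeterministic at comparators) evaluation *)
Definition lvalid (C : lcircuit) (x : pt) (vals : list R) : Prop :=
  length vals = length (lgates C) /\
  forall p g, nth_error (lgates C) p = Some g -> lgate_ok x vals g (nth p vals 0).

Definition loutput (C : lcircuit) (vals : list R) : pt :=
  (nth (lout0 C) vals 0, nth (lout1 C) vals 0, nth (lout2 C) vals 0).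

Definition lcomputes (C : lcircuit) (F : pt -> pt) : Prop :=
  forall x, inK x ->
    (exists vals, lvalid C x vals) /\
    (forall vals, lvalid C x vals -> loutput C vals = F x).

(* Main.v *)
Require Import Defs.
From Stdlib Require Import Reals List Lia Lra Psatz Bool.
Import ListNotations.
Open Scope R_scope.

Definition gvf (x : pt) (look : nat -> R) (g : lgate) : R :=
  match g with
  | LIn d => coord x d
  | LConst c => trunc01 c
  | LAdd i j => trunc01 (look i + look j)
  | LSub i j => trunc01 (look i - look j)
  | LMax i j => trunc01 (Rmax (look i) (look j))
  | LMin i j => trunc01 (Rmin (look i) (look j))
  | LScale c i => trunc01 (c * look i)
  | LCmp i j => 0
  end.

Fixpoint evr (x : pt) (gs : list lgate) (acc : list R) : list R :=
  match gs with
  | [] => acc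
  | g :: gs' => evr x gs' (acc ++ [gvf x (fun i => nth i acc 0) g])
  end.

Definition ev (gs : list lgate) (x : pt) : list R := evr x gs [].
Definition val (gs : list lgate) (x : pt) (p : nat) : R := nth p (ev gs x) 0.

Lemma evr_app : forall x gs t acc, evr x (gs ++ t) acc = evr x t (evr x gs acc).
Proof. induction gs; simpl; auto. Qed.

Lemma evr_len : forall x gs acc, length (evr x gs acc) = (length acc + length gs)%nat.
Proof. induction gs; intros; simpl. lia. rewrite IHgs, length_app; simpl; lia. Qed.

Lemma evr_pre : forall x gs acc, exists l, evr x gs acc = acc ++ l.
Proof. induction gs; intros; simpl. exists []. now rewrite app_nil_r.
  destruct (IHgs (acc ++ [gvf x (fun i => nth i acc 0) a])) as [l Hl].
  rewrite Hl. exists (gvf x (fun i : nat => nth i acc 0) a :: l). now rewrite <- app_assoc. Qed.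

Lemma ev_len : forall gs x, length (ev gs x) = length gs.
Proof. intros. unfold ev. rewrite evr_len. simpl. lia. Qed.

Lemma val_app_lo : forall gs t x p, (p < length gs)%nat -> val (gs ++ t) x p = val gs x p.
Proof. intros. unfold val, ev. rewrite evr_app. destruct (evr_pre x t (evr x gs [])) as [l Hl].
  rewrite Hl. rewrite app_nth1; auto. rewrite evr_len. simpl. lia. Qed.

Lemma val_snoc_last : forall gs g x, val (gs ++ [g]) x (length gs) = gvf x (val gs x) g.
Proof. intros. unfold val, ev. rewrite evr_app. simpl.
  rewrite app_nth2; rewrite evr_len; simpl; try lia.
  rewrite Nat.sub_diag. reflexivity. Qed.

Lemma val_beyond : forall gs x p, (length gs <= p)%nat -> val gs x p = 0.
Proof. intros. unfold val. apply nth_overflow. rewrite ev_len. lia. Qed.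

Lemma val_app_hi : forall gs t x k,
  val (gs ++ t) x (length gs + k) =
  match nth_error t k with Some g => gvf x (val (gs ++ firstn k t) x) g | None => 0 end.
Proof.
  intros. destruct (nth_error t k) as [g|] eqn:E.
  - apply nth_error_split in E as (l1 & l2 & -> & Hl).
    subst k. rewrite firstn_app, firstn_all, Nat.sub_diag. simpl. rewrite app_nil_r.
    replace (gs ++ l1 ++ g :: l2) with (((gs ++ l1) ++ [g]) ++ l2) by (rewrite <- !app_assoc; reflexivity).
    rewrite val_app_lo. replace (length gs + length l1)%nat with (length (gs ++ l1)) by (rewrite length_app; lia).
    apply val_snoc_last. rewrite !length_app; simpl; lia.
  - apply val_beyond. apply nth_error_None in E. rewrite length_app. lia.
Qed.

Lemma val_app_hi0 : forall gs t x,
  val (gs ++ t) x (length gs) =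
  match nth_error t 0 with Some g => gvf x (val gs x) g | None => 0 end.
Proof. intros. pose proof (val_app_hi gs t x 0). rewrite Nat.add_0_r in H. rewrite H.
  simpl. now rewrite app_nil_r. Qed.

Definition nocmp (g : lgate) : Prop := match g with LCmp _ _ => False | _ => True end.
Definition wfg (gs : list lgate) : Prop :=
  forall p g, nth_error gs p = Some g -> lgate_wf p g /\ nocmp g.

Lemma trunc01_range : forall a, 0 <= trunc01 a <= 1.
Proof. intros. unfold trunc01, Rmax, Rmin. repeat destruct Rle_dec; lra. Qed.

Lemma coord_range : forall x d, inK x -> 0 <= coord x d <= 1.
Proof. intros x d [? [? ?]]. destruct d as [|[|]]; simpl; auto. Qed.

Lemma gvf_range : forall x f g, inK x -> 0 <= gvf x f g <= 1.
Proof. intros. destruct g; simpl; try apply trunc01_range; try lra. now apply coord_range. Qed.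

Lemma val_range : forall gs x p, inK x -> 0 <= val gs x p <= 1.
Proof.
  intros gs x p HK. destruct (Nat.lt_ge_cases p (length gs)).
  - assert (Hgen : forall acc, (forall q, 0 <= nth q acc 0 <= 1) -> forall q, 0 <= nth q (evr x gs acc) 0 <= 1).
    { clear H p. induction gs; intros acc Hacc q; simpl; auto.
      apply IHgs. intros q'. destruct (Nat.lt_ge_cases q' (length acc)).
      rewrite app_nth1; auto. rewrite app_nth2 by lia.
      destruct (q' - length acc)%nat as [|[|]]; simpl; try lra. apply gvf_range; auto. }
    apply Hgen. intros [|]; simpl; lra.
  - rewrite val_beyond; auto. lra.
Qed.

Lemma gvf_dep : forall x f f' p g, lgate_wf p g -> (forall i, (i < p)%nat -> f i = f' i) ->
  gvf x f g = gvf x f' g.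
Proof. intros. destruct g; simpl in *; try reflexivity;
  try (destruct H; rewrite !H0 by auto; reflexivity); rewrite H0 by auto; reflexivity. Qed.

Lemma val_split : forall gs p g x, nth_error gs p = Some g -> lgate_wf p g ->
  val gs x p = gvf x (val gs x) g.
Proof.
  intros. apply nth_error_split in H as (l1 & l2 & -> & Hl). subst p.
  replace (l1 ++ g :: l2) with ((l1 ++ [g]) ++ l2) by (rewrite <- app_assoc; reflexivity).
  rewrite val_app_lo by (rewrite length_app; simpl; lia). rewrite val_snoc_last.
  apply gvf_dep with (length l1); auto. intros. rewrite !val_app_lo; auto.
  rewrite length_app; simpl; lia.
Qed.

Definition lcirc (gs : list lgate) (o0 o1 o2 : nat) : lcircuit :=
  {| lgates := gs; lout0 := o0; lout1 := o1; lout2 := o2 |}.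

Lemma ev_valid : forall gs o0 o1 o2 x, wfg gs -> lvalid (lcirc gs o0 o1 o2) x (ev gs x).
Proof.
  intros. split. apply ev_len. simpl. intros p g Hg.
  destruct (H p g Hg) as [Hw Hn].
  change (nth p (ev gs x) 0) with (val gs x p). rewrite (val_split gs p g x Hg Hw).
  destruct g; simpl in *; try tauto; reflexivity.
Qed.

Lemma valid_unique : forall gs o0 o1 o2 x vals, wfg gs -> lvalid (lcirc gs o0 o1 o2) x vals ->
  forall p, (p < length gs)%nat -> nth p vals 0 = val gs x p.
Proof.
  intros gs o0 o1 o2 x vals Hw [Hl Hv] p. simpl in *.
  induction p as [p IH] using (well_founded_induction Wf_nat.lt_wf). intros Hp.
  destruct (nth_error gs p) as [g|] eqn:E.
  2:{ apply nth_error_None in E. lia. }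
  destruct (Hw p g E) as [Hwf Hn]. pose proof (Hv p g E) as Hok.
  rewrite (val_split gs p g x E Hwf).
  assert (Hd : forall i, (i < p)%nat -> nth i vals 0 = val gs x i) by (intros; apply IH; lia).
  destruct g; simpl in *; try tauto; rewrite Hok; try reflexivity;
  try (destruct Hwf; rewrite !Hd by auto; reflexivity); rewrite Hd by auto; reflexivity.
Qed.

Lemma trunc01_lip : forall a b, Rabs (trunc01 a - trunc01 b) <= Rabs (a - b).
Proof. intros. unfold trunc01, Rmax, Rmin. unfold Rabs. repeat destruct Rle_dec; repeat destruct Rcase_abs; lra. Qed.
Lemma Rmax_lip : forall a b c d, Rabs (Rmax a b - Rmax c d) <= Rabs (a - c) + Rabs (b - d).
Proof. intros. unfold Rmax, Rabs. repeat destruct Rle_dec; repeat destruct Rcase_abs; lra. Qed.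
Lemma Rmin_lip : forall a b c d, Rabs (Rmin a b - Rmin c d) <= Rabs (a - c) + Rabs (b - d).
Proof. intros. unfold Rmin, Rabs. repeat destruct Rle_dec; repeat destruct Rcase_abs; lra. Qed.
Lemma coord_lip : forall x y d, Rabs (coord x d - coord y d) <= dist_inf x y.
Proof. intros. unfold dist_inf. pose proof (Rmax_l (Rabs (cx x - cx y)) (Rmax (Rabs (cy x - cy y)) (Rabs (cz x - cz y)))).
  pose proof (Rmax_r (Rabs (cx x - cx y)) (Rmax (Rabs (cy x - cy y)) (Rabs (cz x - cz y)))).
  pose proof (Rmax_l (Rabs (cy x - cy y)) (Rabs (cz x - cz y))).
  pose proof (Rmax_r (Rabs (cy x - cy y)) (Rabs (cz x - cz y))).
  destruct d as [|[|]]; simpl; lra. Qed.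

Lemma dist_inf_ge0 : forall x y, 0 <= dist_inf x y.
Proof. intros. unfold dist_inf. apply Rle_trans with (2 := Rmax_l _ _). apply Rabs_pos. Qed.

Definition gscale (g : lgate) : R := match g with LScale c _ => Rabs c | _ => 0 end.

Lemma val_lip : forall gs, exists L, 0 <= L /\ forall x y p,
  Rabs (val gs x p - val gs y p) <= L * dist_inf x y.
Proof.
  induction gs as [|g gs IH] using rev_ind.
  - exists 0. split. lra. intros. rewrite !val_beyond by (simpl; lia). rewrite Rminus_0_r, Rabs_R0.
    pose proof (dist_inf_ge0 x y). nra.
  - destruct IH as [L [HL IH]]. exists (L * (2 + gscale g) + 1). split.
    { assert (0 <= gscale g) by (destruct g; simpl; try lra; apply Rabs_pos). nra. }
    intros x y p. pose proof (dist_inf_ge0 x y) as Hd.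
    assert (0 <= gscale g) by (destruct g; simpl; try lra; apply Rabs_pos).
    destruct (Nat.lt_ge_cases p (length gs)).
    + rewrite !val_app_lo by auto. specialize (IH x y p). eapply Rle_trans. apply IH.
      apply Rmult_le_compat_r; nra.
    + destruct (Nat.eq_dec p (length gs)).
      * subst. rewrite !val_snoc_last.
        destruct g; simpl in *;
        try (eapply Rle_trans; [apply trunc01_lip|]).
        -- pose proof (coord_lip x y d). nra.
        -- rewrite Rminus_diag, Rabs_R0. nra.
        -- pose proof (IH x y i); pose proof (IH x y j).
           replace (val gs x i + val gs x j - (val gs y i + val gs y j)) with
             ((val gs x i - val gs y i) + (val gs x j - val gs y j)) by ring.
           eapply Rle_trans. apply Rabs_triang. nra.
        -- pose proof (IH x y i); pose proof (IH x y j).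
           replace (val gs x i - val gs x j - (val gs y i - val gs y j)) with
             ((val gs x i - val gs y i) + - (val gs x j - val gs y j)) by ring.
           eapply Rle_trans. apply Rabs_triang. rewrite Rabs_Ropp. nra.
        -- pose proof (IH x y i); pose proof (IH x y j).
           eapply Rle_trans. apply Rmax_lip. nra.
        -- pose proof (IH x y i); pose proof (IH x y j).
           eapply Rle_trans. apply Rmin_lip. nra.
        -- pose proof (IH x y i). rewrite <- Rmult_minus_distr_l, Rabs_mult.
           pose proof (Rabs_pos c). nra.
        -- rewrite Rminus_diag, Rabs_R0. nra.
      * rewrite !val_beyond by (rewrite length_app; simpl; lia). rewrite Rminus_diag, Rabs_R0.
        apply Rmult_le_pos; nra.
Qed.

Definition Fof (gs : list lgate) (o0 o1 o2 : nat) (x : pt) : pt :=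
  (val gs x o0, val gs x o1, val gs x o2).

Lemma generic_props : forall gs o0 o1 o2, wfg gs ->
  (o0 < length gs)%nat -> (o1 < length gs)%nat -> (o2 < length gs)%nat ->
  lcircuit_wf (lcirc gs o0 o1 o2) /\
  (forall x, inK x -> inK (Fof gs o0 o1 o2 x)) /\
  continuous_on_K (Fof gs o0 o1 o2) /\
  lcomputes (lcirc gs o0 o1 o2) (Fof gs o0 o1 o2).
Proof.
  intros gs o0 o1 o2 Hw H0 H1 H2. split; [|split; [|split]].
  - split; simpl; auto. intros p g Hg. apply (Hw p g Hg).
  - intros x Hx. unfold inK, Fof, cx, cy, cz; simpl. repeat split; apply val_range; auto.
  - destruct (val_lip gs) as [L [HL Hlip]]. intros x Hx eps Heps.
    exists (eps / (L + 1)). split. apply Rdiv_lt_0_compat; lra.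
    intros y Hy Hd. pose proof (dist_inf_ge0 y x).
    assert (Hk : L * dist_inf y x < eps).
    { apply Rle_lt_trans with ((L+1) * dist_inf y x). nra.
      apply Rmult_lt_reg_r with (/ (L+1)). apply Rinv_0_lt_compat; lra.
      replace ((L + 1) * dist_inf y x * / (L + 1)) with (dist_inf y x) by (field; lra). exact Hd. }
    unfold dist_inf at 1, Fof, cx, cy, cz; simpl.
    pose proof (Hlip y x o0); pose proof (Hlip y x o1); pose proof (Hlip y x o2).
    unfold Rmax. repeat destruct Rle_dec; lra.
  - intros x Hx. split. exists (ev gs x). apply ev_valid; auto.
    intros vals Hv. unfold loutput, Fof; simpl.
    rewrite !(valid_unique gs o0 o1 o2 x vals Hw Hv); auto.
Qed.

Lemma pow2_pos : forall k, 0 < 2 ^ k.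
Proof. intros. apply pow_lt. lra. Qed.

Lemma INR_pow2 : forall k, INR (2 ^ k) = 2 ^ k.
Proof. intros. rewrite pow_INR. reflexivity. Qed.

Lemma decomp : forall k v, 0 <= v <= 1 ->
  exists m r, (m < 2 ^ k)%nat /\ 0 <= r <= 1 /\ v = (INR m + r) / 2 ^ k.
Proof.
  induction k; intros v Hv.
  - exists 0%nat, v. simpl. repeat split; try lra; try lia; try field.
  - destruct (IHk v Hv) as (m & r & Hm & Hr & ->).
    pose proof (pow2_pos k).
    destruct (Rle_dec r (/2)).
    + exists (2 * m)%nat, (2 * r). repeat split; try lra.
      rewrite Nat.pow_succ_r'. lia. rewrite mult_INR. simpl. field. lra.
    + exists (2 * m + 1)%nat, (2 * r - 1). repeat split; try lra.
      rewrite Nat.pow_succ_r'. lia. rewrite plus_INR, mult_INR. simpl. field. lra.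
Qed.

Definition fl (v : R) : R := Rmin (2 * v) (2 - 2 * v).

Lemma fl_iter : forall k m r, (m < 2 ^ k)%nat -> 0 <= r <= 1 ->
  Nat.iter k fl ((INR m + r) / 2 ^ k) = if Nat.even m then r else 1 - r.
Proof.
  induction k; intros m r Hm Hr.
  - simpl in Hm. assert (m = 0%nat) by lia. subst. simpl. field.
  - rewrite Nat.iter_succ_r. pose proof (pow2_pos k).
    assert (Hk2 : INR (2 ^ k) = 2 ^ k) by apply INR_pow2.
    destruct (Nat.lt_ge_cases m (2 ^ k)).
    + assert (Hm1 : (INR m + 1 <= 2 ^ k)).
      { rewrite <- Hk2. rewrite <- S_INR. apply le_INR. lia. }
      replace (fl ((INR m + r) / 2 ^ S k)) with ((INR m + r) / 2 ^ k).
      apply IHk; auto.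
      unfold fl. simpl pow. replace (2 * ((INR m + r) / (2 * 2 ^ k))) with ((INR m + r) / 2 ^ k) by (field; lra).
      rewrite Rmin_left. reflexivity.
      apply Rmult_le_reg_r with (2 ^ k). lra. unfold Rdiv. rewrite Rmult_minus_distr_r, Rmult_assoc, Rinv_l; lra.
    + assert (HP: (2 ^ S k = 2 * 2^k)%nat) by apply Nat.pow_succ_r'.
      set (m' := (2 ^ S k - m - 1)%nat).
      assert (Hm' : (m' < 2 ^ k)%nat) by (unfold m'; lia).
      assert (Hmr : INR m' = 2 * 2 ^ k - INR m - 1).
      { unfold m'. rewrite !minus_INR. rewrite INR_pow2. simpl. lra. lia. lia. }
      assert (HmK : 2 ^ k <= INR m) by (rewrite <- Hk2; apply le_INR; lia).
      replace (fl ((INR m + r) / 2 ^ S k)) with ((INR m' + (1 - r)) / 2 ^ k).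
      rewrite IHk; auto; try lra.
      assert (He : Nat.even m' = negb (Nat.even m)).
      { assert (Hs : (m' + m + 1 = 2 * 2 ^ k)%nat) by (unfold m'; lia).
        assert (Hev : Nat.even (m' + m + 1) = true) by (rewrite Hs; apply Nat.even_mul).
        rewrite !Nat.even_add in Hev. simpl in Hev.
        destruct (Nat.even m'), (Nat.even m); simpl in *; congruence. }
      rewrite He. destruct (Nat.even m); simpl; lra.
      unfold fl. simpl pow. replace (2 * ((INR m + r) / (2 * 2 ^ k))) with ((INR m + r) / 2 ^ k) by (field; lra).
      rewrite Rmin_right. rewrite Hmr. field. lra.
      apply Rmult_le_reg_r with (2 ^ k). lra. unfold Rdiv. rewrite Rmult_minus_distr_r, Rmult_assoc, Rinv_l; lra.
Qed.

Definition b2R (b : bool) : R := if b then 1 else 0.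

Lemma trunc01_id : forall a, 0 <= a <= 1 -> trunc01 a = a.
Proof. intros. unfold trunc01, Rmax, Rmin. repeat destruct Rle_dec; lra. Qed.
Lemma trunc01_0 : forall a, a <= 0 -> trunc01 a = 0.
Proof. intros. unfold trunc01, Rmax, Rmin. repeat destruct Rle_dec; lra. Qed.
Lemma trunc01_1 : forall a, 1 <= a -> trunc01 a = 1.
Proof. intros. unfold trunc01, Rmax, Rmin. repeat destruct Rle_dec; lra. Qed.

Lemma inv_pow_le : forall j n, (j <= n)%nat -> / 2 ^ n <= / 2 ^ j.
Proof. intros. apply Rinv_le_contravar. apply pow2_pos. apply Rle_pow; auto; lra. Qed.

Lemma sign_ge : forall X K, 0 < K -> X * K >= 0 -> X >= 0.
Proof. intros. destruct (Rle_dec 0 X) as [h|h]; [lra|]. apply Rnot_le_lt in h.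
  pose proof (Rmult_lt_compat_r K X 0 H h). lra. Qed.
Lemma sign_le : forall X K, 0 < K -> X * K <= 0 -> X <= 0.
Proof. intros. destruct (Rle_dec X 0) as [h|h]; [lra|]. apply Rnot_le_lt in h.
  pose proof (Rmult_lt_compat_r K 0 X H h). lra. Qed.

Lemma le_div : forall a c H, 0 < H -> c * H <= a -> c <= a / H.
Proof. intros. apply Rmult_le_reg_r with H; auto. unfold Rdiv. rewrite Rmult_assoc, Rinv_l; lra. Qed.

Lemma level_math : forall n j c rho, (S j <= n)%nat -> (c < 2 ^ S j)%nat -> 1/8 <= rho <= 7/8 ->
  let H := / 2 ^ n in
  let w := (INR c + rho) / 2 ^ S j in
  let t1 := trunc01 (w - (1/2 - H/8)) in
  let b := trunc01 ((4 / H) * t1) in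
  let hb := trunc01 (/2 * b) in
  let t2 := trunc01 (w - hb) in
  let w' := trunc01 (2 * t2) in
  b = b2R (Nat.testbit c j) /\ w' = (INR (c mod 2 ^ j) + rho) / 2 ^ j /\
  (c mod 2 ^ j < 2 ^ j)%nat.
Proof.
  intros n j c rho Hj Hc Hr H w t1 b hb t2 w'.
  pose proof (inv_pow_le _ _ Hj) as HH. fold H in HH.
  assert (HHp : 0 < H) by (apply Rinv_0_lt_compat, pow2_pos).
  pose proof (pow2_pos j) as HK. set (K := 2 ^ j) in *.
  assert (HSK : 2 ^ S j = 2 * K) by reflexivity.
  assert (HSKn : (2 ^ S j = 2 * 2 ^ j)%nat) by apply Nat.pow_succ_r'.
  assert (HKn : INR (2 ^ j) = K) by apply INR_pow2.
  assert (HHK : H * (2 * K) <= 1).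
  { rewrite <- HSK. apply Rmult_le_reg_r with (/ 2 ^ S j). apply Rinv_0_lt_compat, pow2_pos.
    rewrite Rmult_assoc, Rinv_r, Rmult_1_l, Rmult_1_r. exact HH. apply Rgt_not_eq, pow2_pos. }
  assert (Hw : w * (2 * K) = INR c + rho) by (unfold w; rewrite HSK; field; lra).
  assert (Hcpos : 0 <= INR c) by apply pos_INR.
  assert (Hb : b = b2R (Nat.testbit c j)).
  { destruct (Nat.lt_ge_cases c (2 ^ j)) as [Hlt|Hge].
    + assert (Htb : Nat.testbit c j = false).
      { apply Nat.testbit_false. rewrite Nat.div_small by auto. reflexivity. }
      rewrite Htb. simpl.
      assert (Hc1 : INR c + 1 <= K) by (rewrite <- HKn, <- S_INR; apply le_INR; lia).
      unfold b, t1. rewrite (trunc01_0 (w - _)). rewrite Rmult_0_r. apply trunc01_0; lra.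
      assert (Hq : (w - 1/2 + H/8) * (2*K) <= 0) by nra.
      apply sign_le in Hq; lra.
    + assert (Htb : Nat.testbit c j = true).
      { apply Nat.testbit_true. rewrite <- (Nat.div_unique c (2^j) 1 (c - 2^j)) by lia. reflexivity. }
      rewrite Htb. simpl.
      assert (Hc1 : K <= INR c) by (rewrite <- HKn; apply le_INR; lia).
      unfold b, t1. apply trunc01_1.
      rewrite trunc01_id.
      2:{ split. nra. assert (w <= 1). { assert (INR c + 1 <= 2 * K).
          rewrite <- HKn. replace 2 with (INR 2) by reflexivity. rewrite <- mult_INR, <- S_INR. apply le_INR. lia.
          nra. } nra. }
      replace (4 / H * (w - (1 / 2 - H / 8))) with ((4 * (w - (1 / 2 - H / 8))) / H) by (field; lra).
      apply le_div; auto.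
      assert (Hq : (w - 1/2 - H/8) * (2*K) >= 0) by nra.
      apply sign_ge in Hq; lra. }
  split; [exact Hb|split; [|apply Nat.mod_upper_bound; apply Nat.pow_nonzero; lia]].
  destruct (Nat.lt_ge_cases c (2 ^ j)) as [Hlt|Hge].
  - assert (Htb : Nat.testbit c j = false).
    { apply Nat.testbit_false. rewrite Nat.div_small by auto. reflexivity. }
    rewrite Htb in Hb. simpl in Hb.
    assert (Hc1 : INR c + 1 <= K) by (rewrite <- HKn, <- S_INR; apply le_INR; lia).
    rewrite Nat.mod_small by auto.
    assert (Hw2 : 0 <= w <= 1/2).
    { split. assert (0 <= w * (2*K)) by lra. apply Rge_le, sign_ge with (2*K); lra.
      assert ((w - 1/2) * (2*K) <= 0) by nra. apply sign_le in H0; lra. }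
    unfold w', t2, hb. rewrite Hb, Rmult_0_r, (trunc01_0 0), Rminus_0_r by lra.
    rewrite (trunc01_id w) by lra. rewrite trunc01_id by lra.
    fold K. apply Rmult_eq_reg_r with (2*K). rewrite Rmult_assoc, Hw. field. lra. lra.
  - assert (Htb : Nat.testbit c j = true).
    { apply Nat.testbit_true. rewrite <- (Nat.div_unique c (2^j) 1 (c - 2^j)) by lia. reflexivity. }
    rewrite Htb in Hb. simpl in Hb.
    assert (Hc1 : K <= INR c) by (rewrite <- HKn; apply le_INR; lia).
    rewrite <- (Nat.mod_unique c (2^j) 1 (c - 2^j)) by lia.
    rewrite minus_INR by lia. rewrite HKn.
    assert (Hc2 : INR c + 1 <= 2 * K).
    { rewrite <- HKn. replace 2 with (INR 2) by reflexivity. rewrite <- mult_INR, <- S_INR. apply le_INR. lia. }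
    assert (Hw2 : 1/2 <= w <= 1).
    { split. assert ((w - 1/2) * (2*K) >= 0) by nra. apply sign_ge in H0; lra.
      assert ((w - 1) * (2*K) <= 0) by nra. apply sign_le in H0; lra. }
    unfold w', t2, hb. rewrite Hb, Rmult_1_r.
    rewrite (trunc01_id (/2)) by lra. rewrite (trunc01_id (w - /2)) by lra. rewrite trunc01_id by lra.
    apply Rmult_eq_reg_r with (2*K). replace (2 * (w - / 2) * (2 * K)) with (2 * (w * (2 * K)) - 2 * K) by (field; lra).
    rewrite Hw. field. lra. lra.
Qed.

Definition deep (n : nat) (s : R) (c : nat) : Prop :=
  (c < 2 ^ n)%nat /\ exists rho, 1/8 <= rho <= 7/8 /\ s = (INR c + rho) / 2 ^ n.

Definition Tp (n : nat) (u : R) : R := Nat.iter (n + 2) fl (u / 2 + / 2 ^ n / 8).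
Definition lam (n : nat) (u : R) : R := trunc01 (2 * trunc01 (Tp n u - 1/4)).
Definition CP (n : nat) (s : R) : R :=
  trunc01 (Rmax (trunc01 (Rmin (trunc01 s) (1 - / 2 ^ n / 2))) (/ 2 ^ n / 2)).
Definition Pv (n : nat) (u : R) : R := CP n (u - / 2 ^ n / 4).
Definition Qv (n : nat) (u : R) : R := CP n (u + / 2 ^ n / 4).

Lemma div_le_mono : forall X Y N, 0 < N -> X <= Y -> X / N <= Y / N.
Proof. intros. unfold Rdiv. apply Rmult_le_compat_r; auto. left; apply Rinv_0_lt_compat; auto. Qed.
Lemma div_le_rev : forall X Y N, 0 < N -> X / N <= Y / N -> X <= Y.
Proof. intros. apply Rmult_le_reg_r with (/N). apply Rinv_0_lt_compat; auto. exact H0. Qed.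

Lemma Rmin_div : forall X Y N, 0 < N -> Rmin (X / N) (Y / N) = Rmin X Y / N.
Proof. intros. unfold Rmin at 2. destruct Rle_dec. apply Rmin_left, div_le_mono; auto.
  apply Rmin_right, div_le_mono; auto; lra. Qed.
Lemma Rmax_div : forall X Y N, 0 < N -> Rmax (X / N) (Y / N) = Rmax X Y / N.
Proof. intros. unfold Rmax at 2. destruct Rle_dec. apply Rmax_right, div_le_mono; auto.
  apply Rmax_left, div_le_mono; auto; lra. Qed.
Lemma trunc01_div : forall X N, 0 < N -> trunc01 (X / N) = Rmax 0 (Rmin N X) / N.
Proof. intros. unfold trunc01. replace 1 with (N / N) at 1 by (field; lra).
  replace 0 with (0 / N) at 1 by (field; lra). rewrite Rmin_div, Rmax_div; auto. Qed.

Definition clampS (N S : R) : R := Rmax (1/2) (Rmin (N - 1/2) (Rmax 0 (Rmin N S))).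

Lemma CP_scaled : forall n S, (1 <= n)%nat -> CP n (S / 2 ^ n) = clampS (2 ^ n) S / 2 ^ n.
Proof.
  intros. pose proof (pow2_pos n). assert (2 <= 2 ^ n).
  { replace 2 with (2 ^ 1) at 1 by ring. apply Rle_pow; [lra|lia]. }
  unfold CP, clampS. rewrite trunc01_div by auto.
  replace (1 - / 2 ^ n / 2) with ((2 ^ n - 1/2) / 2 ^ n) by (field; lra).
  rewrite Rmin_div by auto. rewrite trunc01_div by auto.
  replace (/ 2 ^ n / 2) with ((1/2) / 2 ^ n) by (field; lra).
  rewrite Rmax_div by auto. rewrite trunc01_div by auto. f_equal.
  unfold Rmax, Rmin. repeat destruct Rle_dec; lra.
Qed.

Lemma Rabs_div : forall X N, 0 < N -> Rabs (X / N) = Rabs X / N.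
Proof. intros. unfold Rdiv. rewrite Rabs_mult, Rabs_inv, (Rabs_pos_eq N); lra. Qed.

Lemma deep_clamp : forall n c rho0, (1 <= n)%nat -> (c < 2 ^ n)%nat -> 1/8 <= rho0 <= 7/8 ->
  deep n (clampS (2 ^ n) (INR c + rho0) / 2 ^ n) c.
Proof.
  intros. split; auto. assert (INR c + 1 <= 2 ^ n) by (rewrite <- INR_pow2, <- S_INR; apply le_INR; lia).
  pose proof (pos_INR c).
  exists (clampS (2 ^ n) (INR c + rho0) - INR c). split.
  unfold clampS, Rmax, Rmin; repeat destruct Rle_dec; lra. f_equal; ring.
Qed.

Lemma deep_low : forall n S, (1 <= n)%nat -> S <= 1/2 -> deep n (clampS (2 ^ n) S / 2 ^ n) 0.
Proof.
  intros. split. pose proof (Nat.pow_nonzero 2 n). lia.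
  assert (2 <= 2 ^ n). { replace 2 with (2 ^ 1) at 1 by ring. apply Rle_pow; [lra|lia]. }
  exists (1/2). split. lra. f_equal. simpl. unfold clampS, Rmax, Rmin; repeat destruct Rle_dec; lra.
Qed.

Lemma deep_high : forall n S, (1 <= n)%nat -> 2 ^ n - 1/2 <= S -> deep n (clampS (2 ^ n) S / 2 ^ n) (2 ^ n - 1).
Proof.
  intros. split. pose proof (Nat.pow_nonzero 2 n). lia.
  assert (2 <= 2 ^ n). { replace 2 with (2 ^ 1) at 1 by ring. apply Rle_pow; [lra|lia]. }
  exists (1/2). split. lra. f_equal. rewrite minus_INR, INR_pow2. simpl.
  unfold clampS, Rmax, Rmin; repeat destruct Rle_dec; lra.
  pose proof (Nat.pow_nonzero 2 n). lia.
Qed.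

Lemma alpha_eq : forall n, alpha n = / 2 ^ n * / 2 ^ n.
Proof. intros. unfold alpha. rewrite <- Rinv_mult. f_equal. rewrite <- pow_add. f_equal. lia. Qed.

Lemma coord_main : forall n u, (1 <= n)%nat -> 0 <= u <= 1 ->
  exists cp cq : nat, (cp < 2 ^ n)%nat /\ (cq < 2 ^ n)%nat /\
    (lam n u < 1 -> deep n (Pv n u) cp) /\ (0 < lam n u -> deep n (Qv n u) cq) /\
    Rabs ((INR cp + /2) / 2 ^ n - u) <= / 2 ^ n /\
    Rabs ((INR cq + /2) / 2 ^ n - u) <= / 2 ^ n /\
    (u < alpha n -> cp = 0%nat /\ cq = 0%nat) /\
    (1 - alpha n < u -> cp = (2 ^ n - 1)%nat /\ cq = (2 ^ n - 1)%nat) /\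
    (forall i, u = (INR i + /2) / 2 ^ n -> cp = i /\ cq = i).
Proof.
  intros n u Hn Hu.
  destruct (decomp n u Hu) as (m & r & Hm & Hr & Hum).
  pose proof (pow2_pos n) as HN. set (N := 2 ^ n) in *.
  assert (HN2 : 2 <= N). { unfold N. replace 2 with (2 ^ 1) at 1 by ring. apply Rle_pow; [lra|lia]. }
  assert (HNn : INR (2 ^ n) = N) by apply INR_pow2.
  assert (Hm1 : INR m + 1 <= N) by (rewrite <- HNn, <- S_INR; apply le_INR; lia).
  assert (Hm0 : 0 <= INR m) by apply pos_INR.
  set (U := INR m + r) in *.
  assert (Hlam : (lam n u < 1 -> r < 1/8 \/ 3/8 < r) /\ (0 < lam n u -> r < 5/8 \/ 7/8 < r)).
  { assert (H4 : 2 ^ (n + 2) = 4 * N) by (rewrite pow_add; unfold N; ring).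
    assert (H4n : (2 ^ (n + 2) = 4 * 2 ^ n)%nat) by (rewrite Nat.pow_add_r; simpl; lia).
    unfold lam, Tp. fold N.
    destruct (Rle_dec r (1/4)).
    - replace (u / 2 + / N / 8) with ((INR (2 * m) + (2 * r + 1/2)) / 2 ^ (n + 2))
      by (rewrite H4, mult_INR, Hum; unfold U; simpl; field; lra).
      rewrite fl_iter by (lia || lra). rewrite Nat.even_mul. simpl.
      unfold trunc01, Rmax, Rmin. split; intros; repeat destruct Rle_dec; lra.
    - destruct (Rle_dec r (3/4)).
      + replace (u / 2 + / N / 8) with ((INR (2 * m + 1) + (2 * r - 1/2)) / 2 ^ (n + 2))
        by (rewrite H4, plus_INR, mult_INR, Hum; unfold U; simpl; field; lra).
        rewrite fl_iter by (lia || lra). rewrite Nat.even_add, Nat.even_mul. simpl.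
        unfold trunc01, Rmax, Rmin. split; intros; repeat destruct Rle_dec; lra.
      + replace (u / 2 + / N / 8) with ((INR (2 * m + 2) + (2 * r - 3/2)) / 2 ^ (n + 2))
        by (rewrite H4, plus_INR, mult_INR, Hum; unfold U; simpl; field; lra).
        rewrite fl_iter by (lia || lra). rewrite Nat.even_add, Nat.even_mul. simpl.
        unfold trunc01, Rmax, Rmin. split; intros; repeat destruct Rle_dec; lra. }
  assert (HPv : Pv n u = clampS N (U - 1/4) / N).
  { unfold Pv. unfold N. rewrite <- CP_scaled by auto. f_equal. rewrite Hum. fold N. field. lra. }
  assert (HQv : Qv n u = clampS N (U + 1/4) / N).
  { unfold Qv. unfold N. rewrite <- CP_scaled by auto. f_equal. rewrite Hum. fold N. field. lra. }
  assert (HiN : / N <= 1/2) by (apply Rle_trans with (/2); [apply Rinv_le_contravar|]; lra).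
  assert (HiNp : 0 < / N) by (apply Rinv_0_lt_compat; lra).
  assert (Hdist : forall c, Rabs (INR c + /2 - U) <= 1 -> Rabs ((INR c + /2) / N - u) <= / N).
  { intros c Hc. rewrite Hum. replace ((INR c + /2) / N - U / N) with ((INR c + /2 - U) / N) by (field; lra).
    rewrite Rabs_div by lra. unfold Rdiv. rewrite <- (Rmult_1_l (/ N)) at 2. apply Rmult_le_compat_r; lra. }
  assert (Hlow : u < alpha n -> m = 0%nat /\ r < 1/2).
  { intros Ha. rewrite alpha_eq in Ha. fold N in Ha. rewrite Hum in Ha.
    assert (U < / N). { apply Rmult_lt_reg_r with (/ N); auto. }
    destruct m. split; auto. simpl in U. unfold U in *. simpl in *. lra.
    exfalso. assert (1 <= INR (S m)) by (apply (le_INR 1); lia). unfold U in *. lra. }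
  assert (Hhigh : 1 - alpha n < u -> m = (2 ^ n - 1)%nat /\ 1/2 < r).
  { intros Ha. rewrite alpha_eq in Ha. fold N in Ha. rewrite Hum in Ha.
    assert (N - / N < U).
    { apply Rmult_lt_reg_r with (/ N); auto. replace ((N - / N) * / N) with (1 - / N * / N) by (field; lra).
      unfold Rdiv in Ha. lra. }
    destruct (Nat.eq_dec m (2 ^ n - 1)). split; auto. unfold U in *. rewrite e, minus_INR, HNn in H; simpl in H.
    lra. pose proof (Nat.pow_nonzero 2 n). lia.
    exfalso. assert (INR m + 2 <= N).
    { rewrite <- HNn. replace 2 with (INR 2) by reflexivity. rewrite <- plus_INR. apply le_INR. lia. }
    unfold U in *. lra. }
  assert (Hcen : forall i, u = (INR i + /2) / N -> m = i /\ r = 1/2).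
  { intros i Hi. assert (HU : U = INR i + /2).
    { apply Rmult_eq_reg_r with (/ N). change (U / N = (INR i + /2) / N). rewrite <- Hum. exact Hi. lra. }
    destruct (Nat.lt_total m i) as [Hlt|[Heq|Hgt]].
    - exfalso. assert (INR m + 1 <= INR i) by (rewrite <- S_INR; apply le_INR; lia). unfold U in HU. lra.
    - subst. split; auto. unfold U in HU. lra.
    - exfalso. assert (INR i + 1 <= INR m) by (rewrite <- S_INR; apply le_INR; lia). unfold U in HU. lra. }
  destruct Hlam as [Hl1 Hl2].
  exists (if Rlt_dec r (1/8) then pred m else m).
  exists (if Rlt_dec (7/8) r then Nat.min (S m) (2 ^ n - 1) else m).
  split; [destruct Rlt_dec; lia|].
  split; [destruct Rlt_dec; lia|].
  split.
  { intros Hl. rewrite HPv. destruct Rlt_dec as [Hr8|Hr8].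
    - destruct m as [|m'].
      + apply deep_low; auto. unfold U. simpl. lra.
      + simpl pred. replace (U - 1/4) with (INR m' + (r + 3/4)) by (unfold U; rewrite S_INR; lra).
        apply deep_clamp; auto; lia || lra.
    - destruct (Hl1 Hl) as [?|Hr3]; [lra|].
      destruct (Rle_dec r (7/8)).
      + replace (U - 1/4) with (INR m + (r - 1/4)) by (unfold U; lra). apply deep_clamp; auto; lra.
      + destruct (Nat.eq_dec m (2 ^ n - 1)).
        * replace (clampS N (U - 1/4)) with (clampS N (INR m + 5/8)).
          apply deep_clamp; auto; lra.
          subst m. unfold U, clampS. rewrite minus_INR, HNn by (pose proof (Nat.pow_nonzero 2 n); lia). simpl.
          unfold Rmax, Rmin; repeat destruct Rle_dec; lra.
        * replace (U - 1/4) with (INR m + (r - 1/4)) by (unfold U; lra). apply deep_clamp; auto; lra.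
  }
  split.
  { intros Hl. rewrite HQv. destruct Rlt_dec as [Hr8|Hr8].
    - destruct (Nat.lt_ge_cases (S m) (2 ^ n)).
      + rewrite Nat.min_l by lia. replace (U + 1/4) with (INR (S m) + (r - 3/4)) by (unfold U; rewrite S_INR; lra).
        apply deep_clamp; auto; lra.
      + rewrite Nat.min_r by lia. apply deep_high; auto.
        assert (m = 2 ^ n - 1)%nat by lia. subst m. unfold U.
        rewrite minus_INR, HNn by (pose proof (Nat.pow_nonzero 2 n); lia). simpl. fold N. lra.
    - destruct (Hl2 Hl) as [Hr5|?]; [|lra].
      replace (U + 1/4) with (INR m + (r + 1/4)) by (unfold U; lra). apply deep_clamp; auto; lra. }
  split.
  { apply Hdist. destruct Rlt_dec.
    - destruct m as [|m']; simpl pred; unfold U; [|rewrite S_INR]; unfold Rabs; destruct Rcase_abs; lra.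
    - unfold U, Rabs; destruct Rcase_abs; lra. }
  split.
  { apply Hdist. destruct Rlt_dec.
    - destruct (Nat.lt_ge_cases (S m) (2 ^ n)).
      + rewrite Nat.min_l by lia. unfold U; rewrite S_INR; unfold Rabs; destruct Rcase_abs; lra.
      + rewrite Nat.min_r by lia. assert (m = 2 ^ n - 1)%nat by lia. rewrite <- H0.
        unfold U, Rabs; destruct Rcase_abs; lra.
    - unfold U, Rabs; destruct Rcase_abs; lra. }
  split.
  { intros Ha. destruct (Hlow Ha) as [-> Hr2]. split; destruct Rlt_dec; simpl; auto; lra. }
  split.
  { intros Ha. destruct (Hhigh Ha) as [Hm' Hr2]. split.
    - destruct Rlt_dec; auto; lra.
    - destruct Rlt_dec; auto. rewrite Nat.min_r; lia. }
  { intros i Hi. destruct (Hcen i Hi) as [-> Hr2]. split; destruct Rlt_dec; auto; lra. }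
Qed.

Definition Lo (b : bool) (a : R) : R := if b then a else 0.
Definition Up (b : bool) (a : R) : R := if b then 1 else a.

Definition om (bx by' bz : bool) (ax ay az : R) : R :=
  Rmax 0 (Rmin (Rmin (Up bx ax) (Up by' ay)) (Up bz az) - Rmax (Rmax (Lo bx ax) (Lo by' ay)) (Lo bz az)).

Definition combos : list (bool * bool * bool) :=
  [(false,false,false); (false,false,true); (false,true,false); (false,true,true);
   (true,false,false); (true,false,true); (true,true,false); (true,true,true)].

Ltac solve_mm :=
  repeat match goal with
  | |- context [Rmax ?a ?b] => first [rewrite (Rmax_left a b) by lra | rewrite (Rmax_right a b) by lra]
  | |- context [Rmin ?a ?b] => first [rewrite (Rmin_left a b) by lra | rewrite (Rmin_right a b) by lra]
  end; lra.

Lemma om_sum : forall ax ay az, 0 <= ax <= 1 -> 0 <= ay <= 1 -> 0 <= az <= 1 ->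
  fold_right (fun c s => match c with (bx, by', bz) => om bx by' bz ax ay az end + s) 0 combos = 1.
Proof.
  intros. unfold combos, om, Lo, Up; simpl.
  destruct (Rle_dec ax ay); destruct (Rle_dec ay az); destruct (Rle_dec ax az); solve_mm.
Qed.

Lemma om_pos : forall bx by' bz ax ay az, 0 < om bx by' bz ax ay az ->
  Lo bx ax < Up bx ax /\ Lo by' ay < Up by' ay /\ Lo bz az < Up bz az.
Proof.
  intros. unfold om in H. unfold Rmax, Rmin in *. repeat destruct Rle_dec; lra.
Qed.

Lemma om_ge0 : forall bx by' bz ax ay az, 0 <= om bx by' bz ax ay az.
Proof. intros. apply Rmax_l. Qed.

Lemma tb : forall b, trunc01 (b2R b) = b2R b.
Proof. destruct b; simpl; unfold trunc01, Rmax, Rmin; repeat destruct Rle_dec; lra. Qed.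
Lemma tnot : forall b, trunc01 (1 - b2R b) = b2R (negb b).
Proof. destruct b; simpl; unfold trunc01, Rmax, Rmin; repeat destruct Rle_dec; lra. Qed.
Lemma tmin : forall a b, trunc01 (Rmin (b2R a) (b2R b)) = b2R (a && b).
Proof. destruct a, b; simpl; unfold trunc01, Rmax, Rmin; repeat destruct Rle_dec; lra. Qed.
Lemma tmax : forall a b, trunc01 (Rmax (b2R a) (b2R b)) = b2R (a || b).
Proof. destruct a, b; simpl; unfold trunc01, Rmax, Rmin; repeat destruct Rle_dec; lra. Qed.

Definition fcol (zx zy zz tx ty tz o0 o1 : bool) : nat :=
  if zx then 1 else if zy then 2 else if zz then 3 else if (tx || ty || tz) then 0
  else (2 * Nat.b2n o0 + Nat.b2n o1)%nat.

Definition tN (a : R) := trunc01 (1 - a).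
Definition tMn (a b : R) := trunc01 (Rmin a b).
Definition tMx (a b : R) := trunc01 (Rmax a b).

Definition logic (zx zy zz tx ty tz o0 o1 : R) : R * R * R * R :=
  let no0 := tN o0 in let no1 := tN o1 in
  let B0 := tMn no0 no1 in let B1 := tMn no0 o1 in let B2 := tMn o0 no1 in let B3 := tMn o0 o1 in
  let nzi := tN zx in let nzj := tN zy in let nzk := tN zz in
  let tt := tMx (tMx tx ty) tz in
  let inner := tN (tMx (tMx (tMx zx zy) zz) tt) in
  let c2 := tMn nzi zy in let c3a := tMn nzi nzj in let c3 := tMn c3a zz in
  let x0 := tMn (tMn c3a nzk) tt in
  (tMx x0 (tMn inner B0), tMx zx (tMn inner B1), tMx c2 (tMn inner B2), tMx c3 (tMn inner B3)).

Lemma logic_ok : forall zx zy zz tx ty tz o0 o1 : bool,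
  logic (b2R zx) (b2R zy) (b2R zz) (b2R tx) (b2R ty) (b2R tz) (b2R o0) (b2R o1) =
  (b2R (Nat.eqb (fcol zx zy zz tx ty tz o0 o1) 0), b2R (Nat.eqb (fcol zx zy zz tx ty tz o0 o1) 1),
   b2R (Nat.eqb (fcol zx zy zz tx ty tz o0 o1) 2), b2R (Nat.eqb (fcol zx zy zz tx ty tz o0 o1) 3)).
Proof.
  intros. unfold logic, tN, tMn, tMx. repeat (rewrite tnot || rewrite tmin || rewrite tmax).
  destruct zx, zy, zz, tx, ty, tz, o0, o1; reflexivity.
Qed.

Lemma wfg_app : forall gs t, wfg gs ->
  (forall j g, nth_error t j = Some g -> lgate_wf (length gs + j) g /\ nocmp g) -> wfg (gs ++ t).
Proof.
  intros gs t Hg Ht p g Hp. destruct (Nat.lt_ge_cases p (length gs)).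
  - rewrite nth_error_app1 in Hp by auto. apply Hg; auto.
  - rewrite nth_error_app2 in Hp by auto. replace p with (length gs + (p - length gs))%nat by lia.
    apply Ht; auto.
Qed.

Ltac wf_tac :=
  let j := fresh "j" in let g := fresh "g" in let Hj := fresh "Hj" in
  intros j g Hj;
  repeat (destruct j as [|j]; [simpl in Hj; inversion Hj; subst; simpl; split; [lia|exact I]|]);
  simpl in Hj; destruct j; discriminate.

Lemma wfg_nil : wfg [].
Proof. intros p g H. destruct p; discriminate. Qed.

Ltac vev :=
  repeat first
    [ rewrite val_app_hi0; simpl nth_error; cbv iota beta; cbn [gvf]
    | rewrite val_app_hi; simpl firstn; simpl nth_error; cbv iota beta; cbn [gvf]
    | rewrite val_app_lo by (rewrite ?length_app; simpl; lia) ].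

Definition H_ (n : nat) : R := / 2 ^ n.
Definition consts (n : nat) : list lgate :=
  [LConst 1; LConst 0; LConst (1/4); LConst (H_ n / 8); LConst (H_ n / 4);
   LConst (1 - H_ n / 2); LConst (H_ n / 2); LConst (1/2 - H_ n / 8); LConst (H_ n); LConst (1 - H_ n)].
Notation i_one := 0%nat (only parsing). Notation i_zero := 1%nat (only parsing). Notation i_qt := 2%nat (only parsing).
Notation i_h8 := 3%nat (only parsing). Notation i_h4 := 4%nat (only parsing). Notation i_hi := 5%nat (only parsing). Notation i_lo := 6%nat (only parsing).
Notation i_thr := 7%nat (only parsing). Notation i_h := 8%nat (only parsing). Notation i_1mh := 9%nat (only parsing).

Lemma H_bounds : forall n, (1 <= n)%nat -> 0 < H_ n <= 1/2.
Proof. intros. unfold H_. split. apply Rinv_0_lt_compat, pow2_pos.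
  replace (1/2) with (/ 2 ^ 1) by (simpl; field). apply inv_pow_le; auto. Qed.

Definition hasc (n : nat) (gs : list lgate) : Prop := exists t, gs = consts n ++ t.

Lemma hasc_ext : forall n gs t, hasc n gs -> hasc n (gs ++ t).
Proof. intros n gs t [t' ->]. exists (t' ++ t). now rewrite app_assoc. Qed.

Lemma hasc_len : forall n gs, hasc n gs -> (10 <= length gs)%nat.
Proof. intros n gs [t ->]. rewrite length_app. simpl. lia. Qed.

Lemma consts_val : forall n gs x, (1 <= n)%nat -> hasc n gs ->
  val gs x i_one = 1 /\ val gs x i_zero = 0 /\ val gs x i_qt = 1/4 /\
  val gs x i_h8 = H_ n / 8 /\ val gs x i_h4 = H_ n / 4 /\ val gs x i_hi = 1 - H_ n / 2 /\
  val gs x i_lo = H_ n / 2 /\ val gs x i_thr = 1/2 - H_ n / 8 /\ val gs x i_h = H_ n /\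
  val gs x i_1mh = 1 - H_ n.
Proof.
  intros n gs x Hn [t ->]. pose proof (H_bounds n Hn).
  assert (E : forall p, (p < 10)%nat -> val (consts n ++ t) x p = val (consts n) x p)
    by (intros; apply val_app_lo; simpl; lia).
  rewrite !E by lia.
  unfold val, ev, consts. simpl.
  repeat split; apply trunc01_id; lra.
Qed.

Fixpoint foldn (k : nat) (w : nat) (gs : list lgate) : nat * list lgate :=
  match k with
  | O => (w, gs)
  | S k' => let L := length gs in
      foldn k' (L + 3)%nat (gs ++ [LScale 2 w; LSub i_one w; LScale 2 (L + 1)%nat; LMin L (L + 2)%nat])
  end.

Lemma fl_range : forall v, 0 <= v <= 1 -> 0 <= fl v <= 1.
Proof. intros. unfold fl, Rmin. destruct Rle_dec; lra. Qed.

Lemma iter_fl_range : forall k v, 0 <= v <= 1 -> 0 <= Nat.iter k fl v <= 1.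
Proof. induction k; intros; simpl; auto. apply fl_range, IHk; auto. Qed.

Lemma foldn_spec : forall n k w gs, (1 <= n)%nat -> hasc n gs -> (w < length gs)%nat -> wfg gs ->
  let '(r, gs') := foldn k w gs in
  (r < length gs')%nat /\ (exists t, gs' = gs ++ t) /\ length gs' = (length gs + 4 * k)%nat /\
  wfg gs' /\ hasc n gs' /\
  forall x, inK x -> val gs' x r = Nat.iter k fl (val gs x w).
Proof.
  intros n k. induction k; intros w gs Hn Hc Hw Hwf; simpl.
  - split; auto. split. exists []; now rewrite app_nil_r. split. lia. split; auto.
  - pose proof (hasc_len n gs Hc).
    set (gs1 := gs ++ [LScale 2 w; LSub i_one w; LScale 2 (length gs + 1)%nat; LMin (length gs) (length gs + 2)%nat]).
    assert (Hc1 : hasc n gs1) by apply hasc_ext, Hc.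
    assert (Hl1 : length gs1 = (length gs + 4)%nat) by (unfold gs1; rewrite length_app; simpl; lia).
    assert (Hw1 : wfg gs1).
    { apply wfg_app; auto. wf_tac. }
    specialize (IHk (length gs + 3)%nat gs1 Hn Hc1 ltac:(lia) Hw1).
    destruct (foldn k (length gs + 3) gs1) as [r gs'] eqn:E.
    destruct IHk as (Hr & [t Ht] & Hl & Hwf' & Hc' & Hv).
    split; auto. split; [|split; [|split; [auto|split; [auto|]]]].
    + exists (([LScale 2 w; LSub i_one w; LScale 2 (length gs + 1)%nat; LMin (length gs) (length gs + 2)%nat]) ++ t).
      rewrite Ht. unfold gs1. now rewrite app_assoc.
    + lia.
    + intros x Hx. rewrite Hv by auto.
      transitivity (Nat.iter k fl (fl (val gs x w))); [|symmetry; exact (eq_trans (eq_sym (Nat.iter_succ k _ fl (val gs x w))) (Nat.iter_succ_r k _ fl (val gs x w)))]. f_equal.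
      destruct (consts_val n gs x Hn Hc) as (Hone & _).
      pose proof (val_range gs x w Hx) as Hr01.
      unfold gs1. vev. rewrite Hone.
      unfold fl. rewrite (trunc01_id (1 - _)) by lra.
      unfold trunc01, Rmin, Rmax. repeat destruct Rle_dec; lra.
Qed.

Definition coordblk (n d : nat) (gs : list lgate) : nat * nat * nat * nat * nat * list lgate :=
  let L := length gs in
  let gs1 := gs ++ [LIn d; LScale (/2) L; LAdd (L + 1)%nat i_h8] in
  let '(T, gs2) := foldn (n + 2) (L + 2)%nat gs1 in
  let L2 := length gs2 in
  (L, (L2 + 1)%nat, (L2 + 2)%nat, (L2 + 5)%nat, (L2 + 8)%nat,
   gs2 ++ [LSub T i_qt; LScale 2 L2; LSub i_one (L2 + 1)%nat;
           LSub L i_h4; LMin (L2 + 3)%nat i_hi; LMax (L2 + 4)%nat i_lo;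
           LAdd L i_h4; LMin (L2 + 6)%nat i_hi; LMax (L2 + 7)%nat i_lo]).

Lemma coordblk_spec : forall n d gs, (1 <= n)%nat -> (d < 3)%nat -> hasc n gs -> wfg gs ->
  let '(u, lm, oml, P, Q, gs') := coordblk n d gs in
  (exists t, gs' = gs ++ t) /\ length gs' = (length gs + 3 + 4 * (n + 2) + 9)%nat /\
  wfg gs' /\ hasc n gs' /\
  (u < length gs')%nat /\ (lm < length gs')%nat /\ (oml < length gs')%nat /\
  (P < length gs')%nat /\ (Q < length gs')%nat /\
  forall x, inK x ->
    val gs' x u = coord x d /\ val gs' x lm = lam n (coord x d) /\
    val gs' x oml = 1 - lam n (coord x d) /\
    val gs' x P = Pv n (coord x d) /\ val gs' x Q = Qv n (coord x d).
Proof.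
  intros n d gs Hn Hd Hc Hwf. unfold coordblk.
  pose proof (hasc_len n gs Hc) as H10.
  set (gs1 := gs ++ [LIn d; LScale (/2) (length gs); LAdd (length gs + 1)%nat i_h8]).
  assert (Hc1 : hasc n gs1) by apply hasc_ext, Hc.
  assert (Hl1 : length gs1 = (length gs + 3)%nat) by (unfold gs1; rewrite length_app; simpl; lia).
  assert (Hw1 : wfg gs1) by (apply wfg_app; auto; wf_tac).
  pose proof (foldn_spec n (n + 2) (length gs + 2)%nat gs1 Hn Hc1 ltac:(lia) Hw1) as FS.
  destruct (foldn (n + 2) (length gs + 2) gs1) as [T gs2] eqn:E.
  destruct FS as (HT & [t2 Ht2] & Hl2 & Hw2 & Hc2 & Hv2).
  set (tl := [LSub T i_qt; LScale 2 (length gs2); LSub i_one (length gs2 + 1)%nat;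
           LSub (length gs) i_h4; LMin (length gs2 + 3)%nat i_hi; LMax (length gs2 + 4)%nat i_lo;
           LAdd (length gs) i_h4; LMin (length gs2 + 6)%nat i_hi; LMax (length gs2 + 7)%nat i_lo]).
  assert (Hlt : length (gs2 ++ tl) = (length gs2 + 9)%nat) by (rewrite length_app; reflexivity).
  split; [|split; [|split; [|split]]].
  - exists ([LIn d; LScale (/2) (length gs); LAdd (length gs + 1)%nat i_h8] ++ t2 ++ tl).
    rewrite Ht2. unfold gs1. rewrite !app_assoc. reflexivity.
  - lia.
  - apply wfg_app; auto. unfold tl. wf_tac.
  - apply hasc_ext; auto.
  - rewrite Hlt. do 5 (split; [lia|]).
    { intros x Hx. pose proof (H_bounds n Hn) as HB.
      destruct (consts_val n gs2 x Hn Hc2) as (Hone & Hzero & Hqt & Hh8 & Hh4 & Hhi & Hlo & _).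
      assert (Hu : val gs2 x (length gs) = coord x d).
      { rewrite Ht2. rewrite val_app_lo by lia. unfold gs1. vev. reflexivity. }
      pose proof (coord_range x d Hx) as Hu01.
      assert (HT' : val gs2 x T = Tp n (coord x d)).
      { rewrite Hv2 by auto. unfold Tp. f_equal. unfold gs1. vev.
        destruct (consts_val n gs x Hn Hc) as (_ & _ & _ & Hh8' & _).
        rewrite Hh8'. unfold H_. rewrite (trunc01_id (/2 * _)) by lra.
        rewrite trunc01_id. lra. unfold H_ in HB. lra. }
      unfold tl. split; [|split; [|split; [|split]]]; vev.
      * exact Hu.
      * rewrite HT', Hqt. reflexivity.
      * rewrite HT', Hqt, Hone. unfold lam. apply trunc01_id.
        pose proof (trunc01_range (2 * trunc01 (Tp n (coord x d) - 1 / 4))). unfold lam. lra.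
      * rewrite Hu, Hh4, Hhi, Hlo. reflexivity.
      * rewrite Hu, Hh4, Hhi, Hlo. reflexivity. }
Qed.

Lemma pow2_ge2 : forall n, (1 <= n)%nat -> 2 <= 2 ^ n.
Proof. intros. replace 2 with (2 ^ 1) at 1 by ring. apply Rle_pow; [lra|lia]. Qed.

Fixpoint bitsn (n k w : nat) (gs : list lgate) : list nat * list lgate :=
  match k with
  | O => ([], gs)
  | S k' => let L := length gs in
      let gs1 := gs ++ [LSub w i_thr; LScale (4 / H_ n) L; LScale (/2) (L + 1)%nat;
                        LSub w (L + 2)%nat; LScale 2 (L + 3)%nat] in
      let '(bs, gs2) := bitsn n k' (L + 4)%nat gs1 in
      (bs ++ [(L + 1)%nat], gs2)
  end.

Lemma bitsn_spec : forall n k w gs, (1 <= n)%nat -> (k <= n)%nat -> hasc n gs -> wfg gs -> (w < length gs)%nat ->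
  let '(bs, gs') := bitsn n k w gs in
  (exists t, gs' = gs ++ t) /\ length gs' = (length gs + 5 * k)%nat /\ wfg gs' /\ hasc n gs' /\
  length bs = k /\ (forall j, (j < k)%nat -> (nth j bs 0 < length gs')%nat) /\
  forall x, inK x -> forall c rho, (c < 2 ^ k)%nat -> 1/8 <= rho <= 7/8 ->
    val gs x w = (INR c + rho) / 2 ^ k ->
    forall j, (j < k)%nat -> val gs' x (nth j bs 0%nat) = b2R (Nat.testbit c j).
Proof.
  intros n k. induction k; intros w gs Hn Hk Hc Hwf Hw; simpl.
  - split. exists []; now rewrite app_nil_r. split. lia. split; auto. split; auto.
    split; auto. split; intros; lia.
  - pose proof (hasc_len n gs Hc).
    set (gs1 := gs ++ [LSub w i_thr; LScale (4 / H_ n) (length gs); LScale (/2) (length gs + 1)%nat;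
                        LSub w (length gs + 2)%nat; LScale 2 (length gs + 3)%nat]).
    assert (Hc1 : hasc n gs1) by apply hasc_ext, Hc.
    assert (Hl1 : length gs1 = (length gs + 5)%nat) by (unfold gs1; rewrite length_app; simpl; lia).
    assert (Hw1 : wfg gs1) by (apply wfg_app; auto; wf_tac).
    specialize (IHk (length gs + 4)%nat gs1 Hn ltac:(lia) Hc1 Hw1 ltac:(lia)).
    destruct (bitsn n k (length gs + 4) gs1) as [bs gs'] eqn:E.
    destruct IHk as ([t Ht] & Hl & Hwf' & Hc' & Hlb & Hbs & Hv).
    split. exists ([LSub w i_thr; LScale (4 / H_ n) (length gs); LScale (/2) (length gs + 1)%nat;
                        LSub w (length gs + 2)%nat; LScale 2 (length gs + 3)%nat] ++ t).
    rewrite Ht. unfold gs1. now rewrite app_assoc.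
    split. lia. split; auto. split; auto. split. rewrite length_app; simpl; lia.
    split.
    { intros j Hj. destruct (Nat.lt_ge_cases j k).
      rewrite app_nth1 by lia. apply Hbs; auto.
      rewrite app_nth2 by lia. replace (j - length bs)%nat with 0%nat by lia. simpl. lia. }
    intros x Hx c rho Hcl Hr Hwv j Hj.
    destruct (consts_val n gs x Hn Hc) as (_ & _ & _ & _ & _ & _ & _ & Hthr & _).
    pose proof (level_math n k c rho Hk Hcl Hr) as LM. cbv zeta in LM. change (2 ^ S k) with (2 * 2 ^ k) in LM.
    rewrite <- Hwv in LM. destruct LM as (Hb & Hw' & Hmod).
    assert (Hbit : val gs1 x (length gs + 1) = b2R (Nat.testbit c k)).
    { rewrite <- Hb. unfold gs1. vev. rewrite Hthr. reflexivity. }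
    assert (Hnext : val gs1 x (length gs + 4) = (INR (c mod 2 ^ k) + rho) / 2 ^ k).
    { rewrite <- Hw'. unfold gs1. vev. rewrite Hthr. reflexivity. }
    destruct (Nat.lt_ge_cases j k).
    + rewrite app_nth1 by lia. rewrite (Hv x Hx (c mod 2 ^ k) rho Hmod Hr Hnext j H0).
      rewrite Nat.mod_pow2_bits_low; auto.
    + assert (j = k) by lia. subst j.
      rewrite app_nth2 by lia. replace (k - length bs)%nat with 0%nat by lia. simpl.
      rewrite Ht. rewrite val_app_lo by lia. exact Hbit.
Qed.

Definition sampleblk (n s : nat) (gs : list lgate) : nat * nat * list nat * list lgate :=
  let L := length gs in
  let gs1 := gs ++ [LSub i_h s; LScale (8 / H_ n) L; LSub s i_1mh; LScale (8 / H_ n) (L + 2)%nat] in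
  let '(bs, gs2) := bitsn n n s gs1 in
  ((L + 1)%nat, (L + 3)%nat, bs, gs2).

Lemma sampleblk_spec : forall n s gs, (1 <= n)%nat -> hasc n gs -> wfg gs -> (s < length gs)%nat ->
  let '(zi, ti, bs, gs') := sampleblk n s gs in
  (exists t, gs' = gs ++ t) /\ length gs' = (length gs + 4 + 5 * n)%nat /\ wfg gs' /\ hasc n gs' /\
  (zi < length gs')%nat /\ (ti < length gs')%nat /\
  length bs = n /\ (forall j, (j < n)%nat -> (nth j bs 0 < length gs')%nat) /\
  forall x, inK x -> forall c, deep n (val gs x s) c ->
    val gs' x zi = b2R (Nat.eqb c 0) /\ val gs' x ti = b2R (Nat.eqb c (2 ^ n - 1)) /\
    forall j, (j < n)%nat -> val gs' x (nth j bs 0%nat) = b2R (Nat.testbit c j).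
Proof.
  intros n s gs Hn Hc Hwf Hs. unfold sampleblk.
  pose proof (hasc_len n gs Hc).
  set (gs1 := gs ++ [LSub i_h s; LScale (8 / H_ n) (length gs); LSub s i_1mh; LScale (8 / H_ n) (length gs + 2)%nat]).
  assert (Hc1 : hasc n gs1) by apply hasc_ext, Hc.
  assert (Hl1 : length gs1 = (length gs + 4)%nat) by (unfold gs1; rewrite length_app; simpl; lia).
  assert (Hw1 : wfg gs1) by (apply wfg_app; auto; wf_tac).
  pose proof (bitsn_spec n n s gs1 Hn (le_n n) Hc1 Hw1 ltac:(lia)) as BS.
  destruct (bitsn n n s gs1) as [bs gs'] eqn:E.
  destruct BS as ([t Ht] & Hl & Hwf' & Hc' & Hlb & Hbs & Hv).
  split. exists ([LSub i_h s; LScale (8 / H_ n) (length gs); LSub s i_1mh; LScale (8 / H_ n) (length gs + 2)%nat] ++ t).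
  rewrite Ht. unfold gs1. now rewrite app_assoc.
  split. lia. split; auto. split; auto. split. lia. split. lia. split; auto. split; auto.
  intros x Hx c [Hcn [rho [Hr Hsv]]].
  assert (Hs1 : val gs1 x s = val gs x s) by (unfold gs1; apply val_app_lo; lia).
  split; [|split].
  - rewrite Ht, val_app_lo by lia. unfold gs1. vev.
    destruct (consts_val n gs x Hn Hc) as (_ & _ & _ & _ & _ & _ & _ & _ & Hh & _).
    rewrite Hh, Hsv. pose proof (H_bounds n Hn). unfold H_ in *.
    pose proof (pow2_pos n). pose proof (pow2_ge2 n Hn). set (N := 2 ^ n) in *. pose proof (pos_INR c).
    destruct (Nat.eq_dec c 0) as [->|Hc0].
    + simpl. apply trunc01_1. replace (/ N - (0 + rho) / N) with ((1 - rho) / N) by (field; lra).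
      rewrite trunc01_id.
      2:{ split. apply Rmult_le_pos; [lra|left; apply Rinv_0_lt_compat; lra].
          apply Rmult_le_reg_r with N; auto. field_simplify; lra. }
      replace (8 / / N * ((1 - rho) / N)) with (8 * (1 - rho)) by (field; lra). lra.
    + apply Nat.eqb_neq in Hc0. rewrite Hc0. simpl. apply trunc01_0. rewrite trunc01_0. lra.
      apply Nat.eqb_neq in Hc0. assert (1 <= INR c) by (apply (le_INR 1); lia).
      replace (/ N - (INR c + rho) / N) with (- ((INR c - 1 + rho) / N)) by (field; lra).
      assert (0 <= (INR c - 1 + rho) / N) by (apply Rmult_le_pos; [lra|left; apply Rinv_0_lt_compat; lra]). lra.
  - rewrite Ht, val_app_lo by lia. unfold gs1. vev.
    destruct (consts_val n gs x Hn Hc) as (_ & _ & _ & _ & _ & _ & _ & _ & _ & Hmh).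
    rewrite Hmh, Hsv. pose proof (H_bounds n Hn). unfold H_ in *.
    pose proof (pow2_pos n). pose proof (INR_pow2 n). pose proof (pow2_ge2 n Hn). set (N := 2 ^ n) in *.
    destruct (Nat.eq_dec c (2 ^ n - 1)).
    + rewrite e, Nat.eqb_refl. simpl. rewrite minus_INR, H2 by (pose proof (Nat.pow_nonzero 2 n); lia). simpl.
      apply trunc01_1. rewrite trunc01_id.
      2:{ replace ((N - 1 + rho) / N - (1 - / N)) with (rho / N) by (field; lra).
          split. apply Rmult_le_pos; [lra|left; apply Rinv_0_lt_compat; lra].
          apply Rmult_le_reg_r with N; auto. field_simplify; lra. }
      replace (8 / / N * ((N - 1 + rho) / N - (1 - / N))) with (8 * rho) by (field; lra). lra.
    + apply Nat.eqb_neq in n0. rewrite n0. simpl. apply trunc01_0. rewrite trunc01_0. lra.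
      apply Nat.eqb_neq in n0.
      assert (INR c + 2 <= N).
      { rewrite <- H2. replace 2 with (INR 2) by reflexivity. rewrite <- plus_INR. apply le_INR. lia. }
      replace ((INR c + rho) / N - (1 - / N)) with ((INR c + rho + 1 - N) / N) by (field; lra).
      apply Rmult_le_reg_r with N; auto. field_simplify; lra.
  - intros j Hj. apply (Hv x Hx c rho Hcn Hr); auto. rewrite Hs1. exact Hsv.
Qed.

Definition trB (base : nat) (imap : nat -> nat) (g : bgate) : lgate :=
  match g with
  | BIn t => LMax (imap t) (imap t)
  | BConst b => if b then LConst 1 else LConst 0
  | BNot i => LSub i_one (base + i)%nat
  | BAnd i j => LMin (base + i)%nat (base + j)%nat
  | BOr i j => LMax (base + i)%nat (base + j)%nat
  end.

Lemma beval_snoc : forall inp bg g acc,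
  beval_aux inp (bg ++ [g]) acc = beval_aux inp bg acc ++ [bgate_val inp (beval_aux inp bg acc) g].
Proof. induction bg; intros; simpl; auto. Qed.

Lemma beval_len : forall inp bg acc, length (beval_aux inp bg acc) = (length acc + length bg)%nat.
Proof. induction bg; intros; simpl. lia. rewrite IHbg, length_app. simpl. lia. Qed.

Lemma simB_spec : forall n m bg gs imap inp, (1 <= n)%nat -> hasc n gs -> wfg gs ->
  (forall p g, nth_error bg p = Some g -> bgate_wf m p g) ->
  (forall t, (t < m)%nat -> (imap t < length gs)%nat) ->
  wfg (gs ++ map (trB (length gs) imap) bg) /\
  forall x, inK x -> (forall t, (t < m)%nat -> val gs x (imap t) = b2R (inp t)) ->
    forall p, (p < length bg)%nat ->
      val (gs ++ map (trB (length gs) imap) bg) x (length gs + p) = b2R (nth p (beval_aux inp bg []) false).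
Proof.
  intros n m bg gs imap inp Hn Hc Hwf Hbw Him. pose proof (hasc_len n gs Hc) as H10.
  induction bg as [|g bg IH] using rev_ind.
  - simpl. rewrite app_nil_r. split; auto. intros; simpl in *; lia.
  - assert (Hbw' : forall p g, nth_error bg p = Some g -> bgate_wf m p g).
    { intros p g' Hp. apply Hbw. rewrite nth_error_app1; auto. apply nth_error_Some. congruence. }
    destruct (IH Hbw') as [IHw IHv].
    assert (Hg : bgate_wf m (length bg) g).
    { apply Hbw. rewrite nth_error_app2 by lia. rewrite Nat.sub_diag. reflexivity. }
    rewrite map_app, app_assoc. simpl. split.
    + apply wfg_app; auto. intros j g' Hj. destruct j; [|destruct j; discriminate].
      simpl in Hj. inversion Hj; subst. rewrite length_app, length_map.
      destruct g; simpl in *; try (destruct b); simpl; try split; try lia; try exact I.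
      specialize (Him k Hg). lia.
    + intros x Hx Hin p Hp. rewrite length_app in Hp. simpl in Hp.
      rewrite beval_snoc.
      destruct (Nat.lt_ge_cases p (length bg)).
      * rewrite val_app_lo by (rewrite length_app, length_map; lia).
        rewrite IHv by auto. rewrite app_nth1 by (rewrite beval_len; simpl; lia). reflexivity.
      * assert (p = length bg) by lia. subst p.
        rewrite app_nth2 by (rewrite beval_len; simpl; lia). rewrite beval_len. simpl.
        rewrite Nat.sub_diag. simpl.
        replace (length gs + length bg)%nat with (length (gs ++ map (trB (length gs) imap) bg))
          by (rewrite length_app, length_map; lia).
        rewrite val_snoc_last.
        assert (Hprev : forall i, (i < length bg)%nat ->
          val (gs ++ map (trB (length gs) imap) bg) x (length gs + i) =
          b2R (nth i (beval_aux inp bg []) false)) by (intros; apply IHv; auto).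
        destruct g; simpl in *.
        -- rewrite val_app_lo by (specialize (Him k Hg); lia). rewrite Hin by auto.
           rewrite Rmax_left by lra. apply tb.
        -- destruct b; simpl; apply trunc01_id; lra.
        -- rewrite Hprev by lia. rewrite val_app_lo by lia.
           destruct (consts_val n gs x Hn Hc) as (Hone & _). rewrite Hone. apply tnot.
        -- destruct Hg. rewrite !Hprev by lia. apply tmin.
        -- destruct Hg. rewrite !Hprev by lia. apply tmax.
Qed.

Lemma Rmin_rng : forall a b, 0 <= a <= 1 -> 0 <= b <= 1 -> 0 <= Rmin a b <= 1.
Proof. intros. unfold Rmin. destruct Rle_dec; lra. Qed.
Lemma Rmax_rng : forall a b, 0 <= a <= 1 -> 0 <= b <= 1 -> 0 <= Rmax a b <= 1.
Proof. intros. unfold Rmax. destruct Rle_dec; lra. Qed.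

Definition imapf (n : nat) (bsx bsy bsz : list nat) (t : nat) : nat :=
  if (t <? n)%nat then nth t bsx 0%nat else if (t <? 2 * n)%nat then nth (t - n) bsy 0%nat
  else nth (t - 2 * n) bsz 0%nat.

Definition part3 (L3 w o0 o1 zx zy zz tx ty tz : nat) : list lgate :=
  [LSub i_one o0; LSub i_one o1; LMin L3 (L3+1); LMin L3 o1; LMin o0 (L3+1); LMin o0 o1;
   LSub i_one zx; LSub i_one zy; LSub i_one zz; LMax tx ty; LMax (L3+9) tz;
   LMax zx zy; LMax (L3+11) zz; LMax (L3+12) (L3+10); LSub i_one (L3+13);
   LMin (L3+6) zy; LMin (L3+6) (L3+7); LMin (L3+16) zz; LMin (L3+16) (L3+8); LMin (L3+18) (L3+10);
   LMin (L3+14) (L3+2); LMax (L3+19) (L3+20); LMin (L3+14) (L3+3); LMax zx (L3+22);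
   LMin (L3+14) (L3+4); LMax (L3+15) (L3+24); LMin (L3+14) (L3+5); LMax (L3+17) (L3+26);
   LMin w (L3+21); LMin w (L3+23); LMin w (L3+25); LMin w (L3+27)]%nat.

Definition comboblk (n : nat) (B : bcircuit) (lx ux ly uy lz uz zx tx zy ty zz tz : nat)
  (bsx bsy bsz : list nat) (gs : list lgate) : nat * nat * nat * nat * list lgate :=
  let L := length gs in
  let gs1 := gs ++ [LMin ux uy; LMin L uz; LMax lx ly; LMax (L + 2)%nat lz; LSub (L + 1)%nat (L + 3)%nat] in
  let base := length gs1 in
  let gs2 := gs1 ++ map (trB base (imapf n bsx bsy bsz)) (bgates B) in
  let L3 := length gs2 in
  (L3 + 28, L3 + 29, L3 + 30, L3 + 31,
   gs2 ++ part3 L3 (L + 4) (base + bout0 B) (base + bout1 B) zx zy zz tx ty tz)%nat.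

Definition sfacts (n : nat) (gs : list lgate) (x : pt) (zi ti : nat) (bs : list nat) (c : nat) : Prop :=
  (c < 2 ^ n)%nat /\ val gs x zi = b2R (Nat.eqb c 0) /\ val gs x ti = b2R (Nat.eqb c (2 ^ n - 1)) /\
  forall j, (j < n)%nat -> val gs x (nth j bs 0%nat) = b2R (Nat.testbit c j).

Definition omv (gs : list lgate) (x : pt) (lx ux ly uy lz uz : nat) : R :=
  Rmax 0 (Rmin (Rmin (val gs x ux) (val gs x uy)) (val gs x uz) -
          Rmax (Rmax (val gs x lx) (val gs x ly)) (val gs x lz)).

Lemma brouwer_fcol : forall B n i j k,
  brouwer_f B n i j k =
  fcol (i =? 0)%nat (j =? 0)%nat (k =? 0)%nat (i =? 2 ^ n - 1)%nat (j =? 2 ^ n - 1)%nat (k =? 2 ^ n - 1)%nat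
    (nth (bout0 B) (beval_aux (cube_input n i j k) (bgates B) []) false)
    (nth (bout1 B) (beval_aux (cube_input n i j k) (bgates B) []) false).
Proof. reflexivity. Qed.

Lemma comboblk_spec : forall n B lx ux ly uy lz uz zx tx zy ty zz tz bsx bsy bsz gs,
  (1 <= n)%nat -> bcircuit_wf (3 * n) B -> hasc n gs -> wfg gs ->
  Forall (fun i => i < length gs)%nat [lx; ux; ly; uy; lz; uz; zx; tx; zy; ty; zz; tz] ->
  length bsx = n -> length bsy = n -> length bsz = n ->
  (forall j, (j < n)%nat -> nth j bsx 0 < length gs /\ nth j bsy 0 < length gs /\ nth j bsz 0 < length gs)%nat ->
  let '(w0, w1, w2, w3, gs') := comboblk n B lx ux ly uy lz uz zx tx zy ty zz tz bsx bsy bsz gs in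
  (exists t, gs' = gs ++ t) /\ length gs' = (length gs + 5 + length (bgates B) + 32)%nat /\
  wfg gs' /\ hasc n gs' /\ (w0 < length gs')%nat /\ (w1 < length gs')%nat /\
  (w2 < length gs')%nat /\ (w3 < length gs')%nat /\
  forall x, inK x -> forall cx cy cz,
    (0 < omv gs x lx ux ly uy lz uz -> sfacts n gs x zx tx bsx cx /\ sfacts n gs x zy ty bsy cy /\
        sfacts n gs x zz tz bsz cz) ->
    let f := brouwer_f B n cx cy cz in
    val gs' x w0 = omv gs x lx ux ly uy lz uz * b2R (f =? 0)%nat /\
    val gs' x w1 = omv gs x lx ux ly uy lz uz * b2R (f =? 1)%nat /\
    val gs' x w2 = omv gs x lx ux ly uy lz uz * b2R (f =? 2)%nat /\
    val gs' x w3 = omv gs x lx ux ly uy lz uz * b2R (f =? 3)%nat.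
Proof.
  intros n B lx ux ly uy lz uz zx tx zy ty zz tz bsx bsy bsz gs Hn HB Hc Hwf Hidx Hlx Hly Hlz Hbits.
  rewrite !Forall_cons_iff in Hidx. destruct Hidx as (Hi1 & Hi2 & Hi3 & Hi4 & Hi5 & Hi6 & Hi7 & Hi8 & Hi9 & Hi10 & Hi11 & Hi12 & _).
  destruct HB as (HBw & Hb0 & Hb1).
  pose proof (hasc_len n gs Hc) as H10.
  unfold comboblk.
  set (p1 := [LMin ux uy; LMin (length gs) uz; LMax lx ly; LMax (length gs + 2)%nat lz; LSub (length gs + 1)%nat (length gs + 3)%nat]).
  set (gs1 := gs ++ p1).
  assert (Hc1 : hasc n gs1) by apply hasc_ext, Hc.
  assert (Hl1 : length gs1 = (length gs + 5)%nat) by (unfold gs1; rewrite length_app; simpl; lia).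
  assert (Hw1 : wfg gs1) by (apply wfg_app; auto; unfold p1; wf_tac).
  set (imap := imapf n bsx bsy bsz).
  assert (Him : forall t, (t < 3 * n)%nat -> (imap t < length gs1)%nat).
  { intros t Ht. unfold imap, imapf. rewrite Hl1.
    destruct (t <? n)%nat eqn:E1; [apply Nat.ltb_lt in E1; destruct (Hbits t E1) as (? & ? & ?); lia|].
    apply Nat.ltb_ge in E1.
    destruct (t <? 2 * n)%nat eqn:E2; [apply Nat.ltb_lt in E2; destruct (Hbits (t - n)%nat ltac:(lia)) as (? & ? & ?); lia|].
    apply Nat.ltb_ge in E2. destruct (Hbits (t - 2 * n)%nat ltac:(lia)) as (? & ? & ?); lia. }
  pose proof (simB_spec n (3 * n) (bgates B) gs1 imap) as SB.
  set (gs2 := gs1 ++ map (trB (length gs1) imap) (bgates B)) in *.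
  assert (Hc2 : hasc n gs2) by apply hasc_ext, Hc1.
  assert (Hl2 : length gs2 = (length gs + 5 + length (bgates B))%nat) by (unfold gs2; rewrite length_app, length_map; lia).
  destruct (SB (fun _ => false) Hn Hc1 Hw1 HBw Him) as [Hw2 _].
  fold imap. fold gs2.
  set (L3 := length gs2) in *.
  set (tl := part3 L3 (length gs + 4) (length gs1 + bout0 B) (length gs1 + bout1 B) zx zy zz tx ty tz).
  assert (Hlt : length (gs2 ++ tl) = (L3 + 32)%nat) by (rewrite length_app; reflexivity).
  split. exists (p1 ++ map (trB (length gs1) imap) (bgates B) ++ tl). unfold gs2, gs1. now rewrite !app_assoc.
  split. lia.
  split. apply wfg_app; auto. unfold tl, part3. wf_tac.
  split. apply hasc_ext; auto.
  rewrite Hlt. do 4 (split; [lia|]).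
  intros x Hx cx cy cz Hsf.
  assert (E1 : forall p, (p < length gs)%nat -> val gs2 x p = val gs x p).
  { intros p Hp. unfold gs2, gs1. rewrite <- app_assoc. apply val_app_lo; auto. }
  assert (Hom : val gs2 x (length gs + 4) = omv gs x lx ux ly uy lz uz).
  { unfold gs2. rewrite val_app_lo by lia. unfold gs1, p1. vev.
    pose proof (val_range gs x lx Hx); pose proof (val_range gs x ux Hx); pose proof (val_range gs x ly Hx);
    pose proof (val_range gs x uy Hx); pose proof (val_range gs x lz Hx); pose proof (val_range gs x uz Hx).
    unfold omv. set (a := val gs x ux) in *. set (b := val gs x uy) in *. set (c := val gs x uz) in *.
    set (d := val gs x lx) in *. set (e := val gs x ly) in *. set (g := val gs x lz) in *.
    assert (Hm1 : 0 <= Rmin a b <= 1) by (apply Rmin_rng; lra).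
    rewrite (trunc01_id (Rmin a b)) by auto.
    assert (Hm2 : 0 <= Rmin (Rmin a b) c <= 1) by (apply Rmin_rng; lra).
    rewrite (trunc01_id (Rmin (Rmin a b) c)) by auto.
    assert (Hm3 : 0 <= Rmax d e <= 1) by (apply Rmax_rng; lra).
    rewrite (trunc01_id (Rmax d e)) by auto.
    assert (Hm4 : 0 <= Rmax (Rmax d e) g <= 1) by (apply Rmax_rng; lra).
    rewrite (trunc01_id (Rmax (Rmax d e) g)) by auto.
    unfold trunc01. rewrite (Rmin_right 1) by lra. reflexivity. }
  assert (Hom01 : 0 <= omv gs x lx ux ly uy lz uz <= 1).
  { rewrite <- Hom. apply val_range; auto. }
  destruct (Rle_lt_dec (omv gs x lx ux ly uy lz uz) 0) as [H0|Hpos].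
  - assert (Hz : omv gs x lx ux ly uy lz uz = 0) by lra.
    rewrite Hz, !Rmult_0_l.
    unfold tl, part3. split; [|split; [|split]]; rewrite val_app_hi; simpl firstn; simpl nth_error; cbv iota beta; cbn [gvf];
      rewrite val_app_lo by (rewrite ?length_app; simpl; lia); rewrite Hom, Hz;
      match goal with |- trunc01 (Rmin 0 (val ?G x ?P)) = 0 =>
        pose proof (val_range G x P Hx); rewrite Rmin_left by lra; apply trunc01_id; lra end.
  - destruct (Hsf Hpos) as ((Hcx & Hzx & Htx & Hbx) & (Hcy & Hzy & Hty & Hby) & (Hcz & Hzz & Htz & Hbz)).
    set (inp := cube_input n cx cy cz).
    destruct (SB inp Hn Hc1 Hw1 HBw Him) as [_ Hsim].
    assert (Hin : forall t, (t < 3 * n)%nat -> val gs1 x (imap t) = b2R (inp t)).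
    { intros t Ht. unfold imap, imapf, inp, cube_input.
      assert (Eg : forall p, (p < length gs)%nat -> val gs1 x p = val gs x p) by (intros; unfold gs1; apply val_app_lo; auto).
      destruct (t <? n)%nat eqn:F1.
      { apply Nat.ltb_lt in F1. rewrite Eg by (destruct (Hbits t F1) as (? & ? & ?); lia). apply Hbx; auto. }
      apply Nat.ltb_ge in F1. destruct (t <? 2 * n)%nat eqn:F2.
      { apply Nat.ltb_lt in F2. rewrite Eg by (destruct (Hbits (t - n)%nat ltac:(lia)) as (? & ? & ?); lia). apply Hby; lia. }
      apply Nat.ltb_ge in F2. rewrite Eg by (destruct (Hbits (t - 2 * n)%nat ltac:(lia)) as (? & ? & ?); lia). apply Hbz; lia. }
    specialize (Hsim x Hx Hin).
    assert (Ho0 : val gs2 x (length gs1 + bout0 B) = b2R (nth (bout0 B) (beval_aux inp (bgates B) []) false)) by (apply Hsim; auto).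
    assert (Ho1 : val gs2 x (length gs1 + bout1 B) = b2R (nth (bout1 B) (beval_aux inp (bgates B) []) false)) by (apply Hsim; auto).
    destruct (consts_val n gs2 x Hn Hc2) as (Hone & _).
    pose proof (logic_ok (cx =? 0)%nat (cy =? 0)%nat (cz =? 0)%nat (cx =? 2 ^ n - 1)%nat (cy =? 2 ^ n - 1)%nat (cz =? 2 ^ n - 1)%nat
      (nth (bout0 B) (beval_aux inp (bgates B) []) false) (nth (bout1 B) (beval_aux inp (bgates B) []) false)) as LO.
    unfold logic in LO. cbv zeta in LO.
    rewrite brouwer_fcol. fold inp.
    injection LO as LO0 LO1 LO2 LO3.
    pose proof (trunc01_range 0) as _.
    assert (Hb : forall b, trunc01 (Rmin (omv gs x lx ux ly uy lz uz) (b2R b)) = omv gs x lx ux ly uy lz uz * b2R b).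
    { intros []; simpl. rewrite Rmin_left by lra. rewrite Rmult_1_r. apply trunc01_id; lra.
      rewrite Rmin_right by lra. rewrite Rmult_0_r. apply trunc01_id; lra. }
    rewrite <- !Hb, <- LO0, <- LO1, <- LO2, <- LO3.
    unfold tl, part3. split; [|split; [|split]]; vev; rewrite Hom, ?Hone, ?Ho0, ?Ho1;
      rewrite ?E1 by lia; rewrite ?Hzx, ?Hzy, ?Hzz, ?Htx, ?Hty, ?Htz; reflexivity.
Qed.

Fixpoint sumblk (s : nat) (ws : list nat) (gs : list lgate) : nat * list lgate :=
  match ws with
  | [] => (s, gs)
  | w :: ws' => let L := length gs in sumblk L ws' (gs ++ [LAdd s w])
  end.

Definition rsum (gs : list lgate) (x : pt) (ws : list nat) : R :=
  fold_right (fun w acc => val gs x w + acc) 0 ws.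

Lemma sumblk_spec : forall ws s gs, wfg gs -> (s < length gs)%nat -> Forall (fun w => w < length gs)%nat ws ->
  let '(r, gs') := sumblk s ws gs in
  (exists t, gs' = gs ++ t) /\ length gs' = (length gs + length ws)%nat /\ wfg gs' /\ (r < length gs')%nat /\
  forall x, inK x -> (forall w, In w ws -> 0 <= val gs x w) -> 0 <= val gs x s ->
    val gs x s + rsum gs x ws <= 1 -> val gs' x r = val gs x s + rsum gs x ws.
Proof.
  induction ws as [|w ws IH]; intros s gs Hw Hs Hf; simpl.
  - split. exists []; now rewrite app_nil_r. split. lia. split; auto. split; auto.
    intros. unfold rsum; simpl; ring.
  - inversion Hf; subst.
    set (gs1 := gs ++ [LAdd s w]).
    assert (Hl1 : length gs1 = S (length gs)) by (unfold gs1; rewrite length_app; simpl; lia).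
    assert (Hw1 : wfg gs1) by (apply wfg_app; auto; wf_tac).
    assert (Hf1 : Forall (fun w => w < length gs1)%nat ws) by (eapply Forall_impl; [|exact H2]; simpl; intros; lia).
    specialize (IH (length gs) gs1 Hw1 ltac:(lia) Hf1).
    destruct (sumblk (length gs) ws gs1) as [r gs'] eqn:E.
    destruct IH as ([t Ht] & Hl & Hw' & Hr & Hv).
    split. exists ([LAdd s w] ++ t). rewrite Ht. unfold gs1. now rewrite app_assoc.
    split. simpl. lia. split; auto. split; auto.
    intros x Hx Hpos Hs0 Htot.
    assert (Eq : forall p, (p < length gs)%nat -> val gs1 x p = val gs x p) by (intros; unfold gs1; apply val_app_lo; auto).
    assert (Hrs : rsum gs1 x ws = rsum gs x ws).
    { clear -Eq H2. induction ws; simpl; auto. inversion H2; subst. unfold rsum in *; simpl. rewrite Eq by auto.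
      f_equal. apply IHws; auto. }
    assert (Hrpos : 0 <= rsum gs x ws).
    { assert (Hp' : forall w', In w' ws -> 0 <= val gs x w') by (intros; apply Hpos; right; auto).
      clear -Hp'. induction ws; unfold rsum; simpl. lra. unfold rsum in IHws.
      pose proof (Hp' a (or_introl eq_refl)). assert (0 <= fold_right (fun w acc => val gs x w + acc) 0 ws).
      apply IHws. intros; apply Hp'; right; auto. lra. }
    assert (Hcons : rsum gs x (w :: ws) = val gs x w + rsum gs x ws) by reflexivity.
    assert (Hv1 : val gs1 x (length gs) = val gs x s + val gs x w).
    { unfold gs1. vev. apply trunc01_id. pose proof (Hpos w (or_introl eq_refl)). lra. }
    rewrite Hv; auto.
    + rewrite Hv1, Hrs. unfold rsum; simpl. ring.
    + intros w' Hw''. rewrite Eq. apply Hpos; right; auto. rewrite Forall_forall in H2. apply H2; auto.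
    + rewrite Hv1. pose proof (Hpos w (or_introl eq_refl)). lra.
    + rewrite Hv1, Hrs. lra.
Qed.

Definition outblk (n u sp sm : nat) (gs : list lgate) : nat * list lgate :=
  let L := length gs in
  ((L + 7)%nat, gs ++ [LScale (/2) u; LAdd L i_qt; LScale (alpha n / 2) sp; LAdd (L + 1)%nat (L + 2)%nat;
                 LScale (alpha n / 2) sm; LSub (L + 3)%nat (L + 4)%nat; LSub (L + 5)%nat i_qt; LScale 2 (L + 6)%nat]).

Lemma alpha_le : forall n, (1 <= n)%nat -> 0 < alpha n <= 1/4.
Proof. intros. unfold alpha. split. apply Rinv_0_lt_compat, pow2_pos.
  replace (1/4) with (/ 2 ^ 2) by (simpl; field). apply Rinv_le_contravar. simpl; lra. apply Rle_pow; lia || lra. Qed.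

Lemma outblk_spec : forall n u sp sm gs, (1 <= n)%nat -> hasc n gs -> wfg gs ->
  (u < length gs)%nat -> (sp < length gs)%nat -> (sm < length gs)%nat ->
  let '(o, gs') := outblk n u sp sm gs in
  (exists t, gs' = gs ++ t) /\ length gs' = (length gs + 8)%nat /\ wfg gs' /\ hasc n gs' /\ (o < length gs')%nat /\
  forall x, inK x -> 0 <= val gs x sp <= 1 -> 0 <= val gs x sm <= 1 ->
    0 <= val gs x u + alpha n * (val gs x sp - val gs x sm) <= 1 ->
    val gs' x o = val gs x u + alpha n * (val gs x sp - val gs x sm).
Proof.
  intros n u sp sm gs Hn Hc Hw Hu Hsp Hsm. unfold outblk.
  pose proof (hasc_len n gs Hc).
  split. eexists; reflexivity. split. rewrite length_app; simpl; lia.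
  split. apply wfg_app; auto; wf_tac. split. apply hasc_ext; auto. split. rewrite length_app; simpl; lia.
  intros x Hx Hp Hm HV. destruct (consts_val n gs x Hn Hc) as (_ & _ & Hqt & _).
  pose proof (alpha_le n Hn). pose proof (val_range gs x u Hx).
  vev. rewrite Hqt.
  set (a := alpha n) in *. set (U := val gs x u) in *. set (P := val gs x sp) in *. set (M := val gs x sm) in *.
  rewrite (trunc01_id (/2 * U)) by lra.
  rewrite (trunc01_id (/2 * U + 1/4)) by lra.
  assert (0 <= a / 2 * P <= 1/8) by nra. assert (0 <= a / 2 * M <= 1/8) by nra.
  rewrite (trunc01_id (a / 2 * P)) by lra. rewrite (trunc01_id (a / 2 * M)) by lra.
  rewrite (trunc01_id (/ 2 * U + 1 / 4 + a / 2 * P)) by lra.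
  rewrite (trunc01_id (/ 2 * U + 1 / 4 + a / 2 * P - a / 2 * M)) by lra.
  rewrite (trunc01_id (/ 2 * U + 1 / 4 + a / 2 * P - a / 2 * M - 1/4)) by nra.
  rewrite trunc01_id by nra. field.
Qed.

Definition SD := (nat * nat * list nat)%type.
Definition loi (b : bool) (om : nat) : nat := if b then om else i_zero.
Definition upi (b : bool) (om : nat) : nat := if b then i_one else om.

Fixpoint combosblk (n : nat) (B : bcircuit) (om0 om1 om2 : nat) (sd : nat -> bool -> SD)
  (cs : list (bool * bool * bool)) (gs : list lgate) : list (nat * nat * nat * nat) * list lgate :=
  match cs with
  | [] => ([], gs)
  | (bx, by', bz) :: cs' =>
      let '(zx, tx, bsx) := sd 0%nat bx in
      let '(zy, ty, bsy) := sd 1%nat by' in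
      let '(zz, tz, bsz) := sd 2%nat bz in
      let '(w0, w1, w2, w3, gs1) := comboblk n B (loi bx om0) (upi bx om0) (loi by' om1) (upi by' om1)
                                      (loi bz om2) (upi bz om2) zx tx zy ty zz tz bsx bsy bsz gs in
      let '(ws, gs2) := combosblk n B om0 om1 om2 sd cs' gs1 in
      ((w0, w1, w2, w3) :: ws, gs2)
  end.

Definition sdok (n : nat) (gs : list lgate) (s : SD) : Prop :=
  let '(z, t, bs) := s in (z < length gs)%nat /\ (t < length gs)%nat /\ length bs = n /\
  forall j, (j < n)%nat -> (nth j bs 0 < length gs)%nat.

Definition cprop (n : nat) (B : bcircuit) (om0 om1 om2 : nat) (sd : nat -> bool -> SD) (gs gs' : list lgate)
  (c : bool * bool * bool) (w : nat * nat * nat * nat) : Prop :=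
  let '(bx, by', bz) := c in let '(w0, w1, w2, w3) := w in
  let '(zx, tx, bsx) := sd 0%nat bx in
  let '(zy, ty, bsy) := sd 1%nat by' in
  let '(zz, tz, bsz) := sd 2%nat bz in
  (w0 < length gs')%nat /\ (w1 < length gs')%nat /\ (w2 < length gs')%nat /\ (w3 < length gs')%nat /\
  forall x, inK x -> forall cx cy cz,
    (0 < omv gs x (loi bx om0) (upi bx om0) (loi by' om1) (upi by' om1) (loi bz om2) (upi bz om2) ->
      sfacts n gs x zx tx bsx cx /\ sfacts n gs x zy ty bsy cy /\ sfacts n gs x zz tz bsz cz) ->
    let f := brouwer_f B n cx cy cz in
    let o := omv gs x (loi bx om0) (upi bx om0) (loi by' om1) (upi by' om1) (loi bz om2) (upi bz om2) in
    val gs' x w0 = o * b2R (f =? 0)%nat /\ val gs' x w1 = o * b2R (f =? 1)%nat /\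
    val gs' x w2 = o * b2R (f =? 2)%nat /\ val gs' x w3 = o * b2R (f =? 3)%nat.

Lemma sfacts_ext : forall n gs t x z ti bs c, sdok n gs (z, ti, bs) ->
  sfacts n gs x z ti bs c -> sfacts n (gs ++ t) x z ti bs c.
Proof.
  intros n gs t x z ti bs c (Hz & Ht & Hl & Hb) (Hc & H1 & H2 & H3). split; auto.
  rewrite !val_app_lo by auto. split; auto. split; auto. intros j Hj. rewrite val_app_lo by auto. auto.
Qed.

Lemma sdok_ext : forall n gs t s, sdok n gs s -> sdok n (gs ++ t) s.
Proof. intros n gs t [[z ti] bs] (Hz & Ht & Hl & Hb). unfold sdok. rewrite length_app.
  split. lia. split. lia. split; auto. intros j Hj. specialize (Hb j Hj). lia. Qed.

Lemma omv_ext : forall gs t x a b c d e f, (a < length gs)%nat -> (b < length gs)%nat -> (c < length gs)%nat ->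
  (d < length gs)%nat -> (e < length gs)%nat -> (f < length gs)%nat ->
  omv (gs ++ t) x a b c d e f = omv gs x a b c d e f.
Proof. intros. unfold omv. rewrite !val_app_lo by auto. reflexivity. Qed.

Opaque comboblk.
Lemma combosblk_spec : forall n B om0 om1 om2 sd cs gs, (1 <= n)%nat -> bcircuit_wf (3 * n) B ->
  hasc n gs -> wfg gs -> (om0 < length gs)%nat -> (om1 < length gs)%nat -> (om2 < length gs)%nat ->
  (forall d b, sdok n gs (sd d b)) ->
  let '(ws, gs') := combosblk n B om0 om1 om2 sd cs gs in
  (exists t, gs' = gs ++ t) /\ length gs' = (length gs + length cs * (37 + length (bgates B)))%nat /\
  wfg gs' /\ hasc n gs' /\ Forall2 (cprop n B om0 om1 om2 sd gs gs') cs ws.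
Proof.
  intros n B om0 om1 om2 sd cs. induction cs as [|[[bx by'] bz] cs IH]; intros gs Hn HB Hc Hw H0 H1 H2 Hsd; simpl.
  - split. exists []; now rewrite app_nil_r. split. lia. split; auto.
  - pose proof (hasc_len n gs Hc).
    destruct (sd 0%nat bx) as [[zx tx] bsx] eqn:Ex.
    destruct (sd 1%nat by') as [[zy ty] bsy] eqn:Ey.
    destruct (sd 2%nat bz) as [[zz tz] bsz] eqn:Ez.
    pose proof (Hsd 0%nat bx) as Sx. rewrite Ex in Sx. destruct Sx as (Hzx & Htx & Hlx & Hbx).
    pose proof (Hsd 1%nat by') as Sy. rewrite Ey in Sy. destruct Sy as (Hzy & Hty & Hly & Hby).
    pose proof (Hsd 2%nat bz) as Sz. rewrite Ez in Sz. destruct Sz as (Hzz & Htz & Hlz & Hbz).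
    assert (Hidx : Forall (fun i => i < length gs)%nat [loi bx om0; upi bx om0; loi by' om1; upi by' om1;
                     loi bz om2; upi bz om2; zx; tx; zy; ty; zz; tz]).
    { unfold loi, upi. repeat constructor; try destruct bx; try destruct by'; try destruct bz; lia. }
    pose proof (comboblk_spec n B (loi bx om0) (upi bx om0) (loi by' om1) (upi by' om1) (loi bz om2) (upi bz om2)
      zx tx zy ty zz tz bsx bsy bsz gs Hn HB Hc Hw Hidx Hlx Hly Hlz
      ltac:(intros j Hj; split; [|split]; auto)) as CB.
    destruct (comboblk n B (loi bx om0) (upi bx om0) (loi by' om1) (upi by' om1) (loi bz om2) (upi bz om2)
      zx tx zy ty zz tz bsx bsy bsz gs) as [[[[w0 w1] w2] w3] gs1] eqn:EC.
    destruct CB as ([t1 Ht1] & Hl1 & Hw1 & Hc1 & Hw0' & Hw1' & Hw2' & Hw3' & Hv).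
    assert (Hsd1 : forall d b, sdok n gs1 (sd d b)) by (intros; rewrite Ht1; apply sdok_ext; auto).
    specialize (IH gs1 Hn HB Hc1 Hw1 ltac:(lia) ltac:(lia) ltac:(lia) Hsd1).
    destruct (combosblk n B om0 om1 om2 sd cs gs1) as [ws gs2] eqn:ER.
    destruct IH as ([t2 Ht2] & Hl2 & Hw2 & Hc2 & HF).
    split. exists (t1 ++ t2). rewrite Ht2, Ht1. now rewrite app_assoc.
    split. simpl. lia. split; auto. split; auto.
    constructor.
    + unfold cprop. rewrite Ex, Ey, Ez. rewrite Ht2, length_app. do 4 (split; [lia|]).
      intros x Hx cx cy cz Hpre. rewrite !val_app_lo by lia. apply Hv; auto.
    + clear - HF Ht1 Hsd H0 H1 H2 H.
      eapply Forall2_impl; [|exact HF].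
      intros [[bx by'] bz] [[[w0 w1] w2] w3]. unfold cprop.
      destruct (sd 0%nat bx) as [[zx tx] bsx] eqn:Ex.
      destruct (sd 1%nat by') as [[zy ty] bsy] eqn:Ey.
      destruct (sd 2%nat bz) as [[zz tz] bsz] eqn:Ez.
      intros (A1 & A2 & A3 & A4 & Hv). do 4 (split; [auto|]).
      intros x Hx cx cy cz Hpre. rewrite Ht1 in Hv.
      assert (Hom : omv (gs ++ t1) x (loi bx om0) (upi bx om0) (loi by' om1) (upi by' om1) (loi bz om2) (upi bz om2)
                    = omv gs x (loi bx om0) (upi bx om0) (loi by' om1) (upi by' om1) (loi bz om2) (upi bz om2)).
      { apply omv_ext; unfold loi, upi; destruct bx, by', bz; lia. }
      rewrite <- Hom. apply Hv; auto. rewrite Hom. intros Hp.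
      destruct (Hpre Hp) as (Sx & Sy & Sz).
      pose proof (Hsd 0%nat bx) as Dx; rewrite Ex in Dx. pose proof (Hsd 1%nat by') as Dy; rewrite Ey in Dy.
      pose proof (Hsd 2%nat bz) as Dz; rewrite Ez in Dz.
      split; [|split]; apply sfacts_ext; auto.
Qed.
Transparent comboblk.

Definition fB (B : bcircuit) (n : nat) (c : nat * nat * nat) : nat :=
  let '(i, j, k) := c in brouwer_f B n i j k.
Definition cen (n : nat) (c : nat * nat * nat) : pt := let '(i, j, k) := c in center n i j k.

Definition wsum (l : list (R * (nat * nat * nat))) : R := fold_right (fun p s => fst p + s) 0 l.
Definition dsum (B : bcircuit) (n : nat) (l : list (R * (nat * nat * nat))) : pt :=
  fold_right (fun p s => vadd (vscale (fst p) (delta_col n (fB B n (snd p)))) s) vzero l.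

Definition keyprop (B : bcircuit) (n : nat) (F : pt -> pt) : Prop :=
  forall x, inK x -> exists l : list (R * (nat * nat * nat)),
    (forall w c, In (w, c) l -> 0 <= w /\
       (let '(i, j, k) := c in (i < 2 ^ n)%nat /\ (j < 2 ^ n)%nat /\ (k < 2 ^ n)%nat) /\
       dist_inf (cen n c) x <= / 2 ^ n) /\
    wsum l = 1 /\ vsub (F x) x = dsum B n l /\
    (forall i j k, x = center n i j k -> forall w c, In (w, c) l -> c = (i, j, k)).

Lemma center_inK : forall n i j k, (i < 2 ^ n)%nat -> (j < 2 ^ n)%nat -> (k < 2 ^ n)%nat -> inK (center n i j k).
Proof.
  intros. pose proof (pow_lt 2 n ltac:(lra)) as HN.
  assert (G : forall a, (a < 2 ^ n)%nat -> 0 <= (INR a + /2) / 2 ^ n <= 1).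
  { intros a Ha. assert (INR a + 1 <= 2 ^ n).
    { rewrite <- S_INR. replace (2 ^ n) with (INR (2 ^ n)) by (rewrite pow_INR; reflexivity). apply le_INR. lia. }
    pose proof (pos_INR a). split. apply Rmult_le_pos; [lra|left; apply Rinv_0_lt_compat; lra].
    apply Rmult_le_reg_r with (2 ^ n); auto. unfold Rdiv. rewrite Rmult_assoc, Rinv_l; lra. }
  unfold inK, center, cx, cy, cz; simpl. split; [|split]; apply G; auto.
Qed.

Lemma dsum_const : forall B n l c0, (forall w c, In (w, c) l -> c = c0) ->
  dsum B n l = vscale (wsum l) (delta_col n (fB B n c0)).
Proof.
  induction l as [|[w c] l IH]; intros c0 Hc; simpl.
  - unfold vscale, vzero. destruct (delta_col n (fB B n c0)) as [[a b] d]. unfold cx, cy, cz; simpl. f_equal; [f_equal|]; ring.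
  - rewrite (IH c0) by (intros; eapply Hc; right; eauto). rewrite (Hc w c) by (left; auto).
    unfold vadd, vscale, cx, cy, cz; simpl. f_equal; [f_equal|]; ring.
Qed.

Lemma key_implements : forall B n F, keyprop B n F -> implements B n F.
Proof.
  intros B n F HK.
  assert (Hcen : forall i j k, (i < 2 ^ n)%nat -> (j < 2 ^ n)%nat -> (k < 2 ^ n)%nat ->
    vsub (F (center n i j k)) (center n i j k) = delta_col n (brouwer_f B n i j k)).
  { intros i j k Hi Hj Hk. destruct (HK _ (center_inK n i j k Hi Hj Hk)) as (l & Hl & Hs & Hv & Hc).
    rewrite Hv. rewrite (dsum_const B n l (i, j, k)) by (eapply Hc; reflexivity). rewrite Hs.
    simpl. unfold vscale. destruct (delta_col n (brouwer_f B n i j k)) as [[a b] d]. unfold cx, cy, cz; simpl.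
    f_equal; [f_equal|]; ring. }
  split; auto.
  intros x Hx Hnc. destruct (HK x Hx) as (l & Hl & Hs & Hv & _).
  exists (map (fun p => (fst p, cen n (snd p))) l). split; [|split].
  - intros w z Hin. apply in_map_iff in Hin as ([w' c] & Heq & Hin). simpl in Heq. inversion Heq; subst.
    destruct (Hl w c Hin) as (Hw & Hc & Hd). split; auto. split; auto.
    destruct c as [[i j] k]. destruct Hc as (? & ? & ?). exists i, j, k. repeat split; auto.
  - rewrite <- Hs. unfold wsum. clear. induction l; simpl; auto. rewrite IHl. reflexivity.
  - rewrite Hv. unfold dsum. clear Hv Hs.
    induction l as [|[w c] l IH]; simpl; auto.
    rewrite IH by (intros; eapply Hl; right; eauto).
    destruct c as [[i j] k]. destruct (Hl w (i, j, k) (or_introl eq_refl)) as (_ & (Hi & Hj & Hk) & _).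
    simpl. rewrite Hcen; auto.
Qed.

Definition sdf (a0 a1 b0 b1 c0 c1 : SD) (d : nat) (b : bool) : SD :=
  match d with 0%nat => if b then a1 else a0 | 1%nat => if b then b1 else b0 | _ => if b then c1 else c0 end.

Definition sel (q : nat) (w : nat * nat * nat * nat) : nat :=
  let '(a, b, c, d) := w in match q with 0%nat => a | 1%nat => b | 2%nat => c | _ => d end.

Definition build (n : nat) (B : bcircuit) : list lgate * nat * nat * nat :=
  let g0 := consts n in
  let '(u0, l0, o0, P0, Q0, g1) := coordblk n 0 g0 in
  let '(u1, l1, o1, P1, Q1, g2) := coordblk n 1 g1 in
  let '(u2, l2, o2, P2, Q2, g3) := coordblk n 2 g2 in
  let '(zp0, tp0, bp0, g4) := sampleblk n P0 g3 in
  let '(zq0, tq0, bq0, g5) := sampleblk n Q0 g4 in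
  let '(zp1, tp1, bp1, g6) := sampleblk n P1 g5 in
  let '(zq1, tq1, bq1, g7) := sampleblk n Q1 g6 in
  let '(zp2, tp2, bp2, g8) := sampleblk n P2 g7 in
  let '(zq2, tq2, bq2, g9) := sampleblk n Q2 g8 in
  let sd := sdf (zp0, tp0, bp0) (zq0, tq0, bq0) (zp1, tp1, bp1) (zq1, tq1, bq1) (zp2, tp2, bp2) (zq2, tq2, bq2) in
  let '(ws, g10) := combosblk n B o0 o1 o2 sd combos g9 in
  let '(s0, g11) := sumblk i_zero (map (sel 0) ws) g10 in
  let '(s1, g12) := sumblk i_zero (map (sel 1) ws) g11 in
  let '(s2, g13) := sumblk i_zero (map (sel 2) ws) g12 in
  let '(s3, g14) := sumblk i_zero (map (sel 3) ws) g13 in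
  let '(r0, g15) := outblk n u0 s1 s0 g14 in
  let '(r1, g16) := outblk n u1 s2 s0 g15 in
  let '(r2, g17) := outblk n u2 s3 s0 g16 in
  (g17, r0, r1, r2).

Lemma consts_ok : forall n, hasc n (consts n) /\ wfg (consts n) /\ length (consts n) = 10%nat.
Proof. intros. split. exists []. now rewrite app_nil_r. split; auto.
  replace (consts n) with ([] ++ consts n) by reflexivity. apply wfg_app. apply wfg_nil. unfold consts. wf_tac. Qed.

Lemma bf_le3 : forall B n i j k, (brouwer_f B n i j k <= 3)%nat.
Proof. intros. rewrite brouwer_fcol. unfold fcol.
  destruct (i =? 0)%nat, (j =? 0)%nat, (k =? 0)%nat, (i =? 2 ^ n - 1)%nat, (j =? 2 ^ n - 1)%nat, (k =? 2 ^ n - 1)%nat;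
  simpl; try lia; destruct (nth _ _ false), (nth _ _ false); simpl; lia. Qed.

Lemma bf_i0 : forall B n j k, brouwer_f B n 0 j k = 1%nat.
Proof. reflexivity. Qed.
Lemma bf_iM : forall B n j k, (1 <= n)%nat -> brouwer_f B n (2 ^ n - 1) j k <> 1%nat.
Proof. intros. rewrite brouwer_fcol. unfold fcol.
  assert (E : (2 ^ n - 1 =? 0)%nat = false) by (apply Nat.eqb_neq; assert (2 ^ 1 <= 2 ^ n)%nat by (apply Nat.pow_le_mono_r; lia); simpl in *; lia).
  rewrite E, Nat.eqb_refl. destruct (j =? 0)%nat, (k =? 0)%nat; simpl; lia. Qed.
Lemma bf_j0 : forall B n i k, brouwer_f B n i 0 k <> 0%nat.
Proof. intros. rewrite brouwer_fcol. unfold fcol. destruct (i =? 0)%nat; simpl; lia. Qed.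
Lemma bf_jM : forall B n i k, (1 <= n)%nat -> brouwer_f B n i (2 ^ n - 1) k <> 2%nat.
Proof. intros. rewrite brouwer_fcol. unfold fcol.
  assert (E : (2 ^ n - 1 =? 0)%nat = false) by (apply Nat.eqb_neq; assert (2 ^ 1 <= 2 ^ n)%nat by (apply Nat.pow_le_mono_r; lia); simpl in *; lia).
  rewrite E, Nat.eqb_refl. destruct (i =? 0)%nat, (k =? 0)%nat; simpl; try lia.
  rewrite Bool.orb_true_r. simpl. lia. Qed.
Lemma bf_k0 : forall B n i j, brouwer_f B n i j 0 <> 0%nat.
Proof. intros. rewrite brouwer_fcol. unfold fcol. destruct (i =? 0)%nat, (j =? 0)%nat; simpl; lia. Qed.
Lemma bf_kM : forall B n i j, (1 <= n)%nat -> brouwer_f B n i j (2 ^ n - 1) <> 3%nat.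
Proof. intros. rewrite brouwer_fcol. unfold fcol.
  assert (E : (2 ^ n - 1 =? 0)%nat = false) by (apply Nat.eqb_neq; assert (2 ^ 1 <= 2 ^ n)%nat by (apply Nat.pow_le_mono_r; lia); simpl in *; lia).
  rewrite E, Nat.eqb_refl. destruct (i =? 0)%nat, (j =? 0)%nat; simpl; try lia.
  rewrite Bool.orb_true_r. simpl. lia. Qed.

Lemma delta_expand : forall n f, (f <= 3)%nat ->
  delta_col n f = (alpha n * (b2R (f =? 1)%nat - b2R (f =? 0)%nat),
                   alpha n * (b2R (f =? 2)%nat - b2R (f =? 0)%nat),
                   alpha n * (b2R (f =? 3)%nat - b2R (f =? 0)%nat)).
Proof. intros. destruct f as [|[|[|[|]]]]; simpl; try lia; f_equal; try f_equal; ring. Qed.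

Definition omc (gs : list lgate) (x : pt) (om0 om1 om2 : nat) (c : bool * bool * bool) : R :=
  let '(bx, by', bz) := c in
  omv gs x (loi bx om0) (upi bx om0) (loi by' om1) (upi by' om1) (loi bz om2) (upi bz om2).

Definition cpre (n : nat) (gs : list lgate) (om0 om1 om2 : nat) (sd : nat -> bool -> SD) (x : pt)
  (c : bool * bool * bool) (cb : nat * nat * nat) : Prop :=
  let '(bx, by', bz) := c in let '(cx, cy, cz) := cb in
  let '(zx, tx, bsx) := sd 0%nat bx in
  let '(zy, ty, bsy) := sd 1%nat by' in
  let '(zz, tz, bsz) := sd 2%nat bz in
  0 < omv gs x (loi bx om0) (upi bx om0) (loi by' om1) (upi by' om1) (loi bz om2) (upi bz om2) ->
  sfacts n gs x zx tx bsx cx /\ sfacts n gs x zy ty bsy cy /\ sfacts n gs x zz tz bsz cz.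

Lemma sum_ws : forall n B om0 om1 om2 sd gs gs' x q cub cs ws, inK x ->
  Forall2 (cprop n B om0 om1 om2 sd gs gs') cs ws ->
  (forall c, In c cs -> cpre n gs om0 om1 om2 sd x c (cub c)) ->
  rsum gs' x (map (sel q) ws) =
  fold_right (fun c acc => omc gs x om0 om1 om2 c * b2R (fB B n (cub c) =? Nat.min q 3)%nat + acc) 0 cs.
Proof.
  intros n B om0 om1 om2 sd gs gs' x q cub cs ws Hx HF. induction HF as [|c w cs ws Hcw HF IH]; intros Hpre; simpl.
  - reflexivity.
  - unfold rsum in *; simpl. rewrite IH by (intros; apply Hpre; right; auto). f_equal.
    specialize (Hpre c (or_introl eq_refl)). revert Hcw Hpre.
    destruct c as [[bx by'] bz]. destruct w as [[[w0 w1] w2] w3]. destruct (cub (bx, by', bz)) as [[cx cy] cz] eqn:Ecub.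
    unfold cprop, cpre, omc, fB.
    destruct (sd 0%nat bx) as [[zx tx] bsx]. destruct (sd 1%nat by') as [[zy ty] bsy].
    destruct (sd 2%nat bz) as [[zz tz] bsz].
    intros (_ & _ & _ & _ & Hv) Hpre. destruct (Hv x Hx cx cy cz Hpre) as (V0 & V1 & V2 & V3).
    destruct q as [|[|[|q]]]; simpl; auto.
    rewrite Nat.min_0_r. auto.
Qed.

Lemma fold_nonneg : forall (cs : list (bool * bool * bool)) (g : bool * bool * bool -> R),
  (forall c, 0 <= g c) -> 0 <= fold_right (fun c acc => g c + acc) 0 cs.
Proof. induction cs; intros; simpl. lra. specialize (IHcs g H). specialize (H a). lra. Qed.

Lemma fold_le : forall (cs : list (bool * bool * bool)) (g h : bool * bool * bool -> R),
  (forall c, g c <= h c) -> fold_right (fun c acc => g c + acc) 0 cs <= fold_right (fun c acc => h c + acc) 0 cs.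
Proof. induction cs; intros; simpl. lra. specialize (IHcs g h H). specialize (H a). lra. Qed.

Lemma fold_zero : forall (cs : list (bool * bool * bool)) (g : bool * bool * bool -> R),
  (forall c, In c cs -> g c = 0) -> fold_right (fun c acc => g c + acc) 0 cs = 0.
Proof. induction cs; intros; simpl. lra. rewrite IHcs, H; auto. lra. left; auto. intros; apply H; right; auto. Qed.

Lemma ext_val : forall gA gB t x p, gB = gA ++ t -> (p < length gA)%nat -> val gB x p = val gA x p.
Proof. intros. subst. apply val_app_lo; auto. Qed.

Lemma cprop_idx : forall n B om0 om1 om2 sd gs gs' cs ws q, Forall2 (cprop n B om0 om1 om2 sd gs gs') cs ws ->
  Forall (fun w => w < length gs')%nat (map (sel q) ws).
Proof.
  intros. induction H; simpl; constructor; auto.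
  destruct x as [[bx by'] bz]. destruct y as [[[w0 w1] w2] w3]. unfold cprop in H.
  destruct (sd 0%nat bx) as [[? ?] ?]. destruct (sd 1%nat by') as [[? ?] ?]. destruct (sd 2%nat bz) as [[? ?] ?].
  destruct H as (? & ? & ? & ? & _). destruct q as [|[|[|]]]; simpl; auto.
Qed.

Lemma Forall2_len : forall {A B} (P : A -> B -> Prop) l1 l2, Forall2 P l1 l2 -> length l1 = length l2.
Proof. intros. induction H; simpl; auto. Qed.

Lemma lift_sfacts : forall n gP gA gB gZ (s z t : nat) (bs : list nat) x c v,
  (exists T, gA = gP ++ T) -> (exists T, gZ = gB ++ T) -> (s < length gP)%nat -> val gP x s = v -> deep n v c ->
  (forall c, deep n (val gA x s) c -> val gB x z = b2R (Nat.eqb c 0) /\ val gB x t = b2R (Nat.eqb c (2 ^ n - 1)) /\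
     forall j, (j < n)%nat -> val gB x (nth j bs 0%nat) = b2R (Nat.testbit c j)) ->
  sdok n gB (z, t, bs) -> sfacts n gZ x z t bs c.
Proof.
  intros n gP gA gB gZ s z t bs x c v [T1 E1] [T2 E2] Hs Hv Hd Hspec Hok.
  assert (Hd' : deep n (val gA x s) c) by (rewrite E1, val_app_lo, Hv; auto).
  destruct (Hspec c Hd') as (A & Bq & Cq).
  rewrite E2. apply sfacts_ext; auto. split. apply Hd. auto.
Qed.

Lemma pt_eq : forall a b c a' b' c' : R, a = a' -> b = b' -> c = c' -> ((a, b, c) : pt) = (a', b', c').
Proof. intros; subst; reflexivity. Qed.

Definition fsum (cs : list (bool * bool * bool)) (g : bool * bool * bool -> R) : R :=
  fold_right (fun c acc => g c + acc) 0 cs.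

Lemma dsum_map : forall B n (W : bool * bool * bool -> R) K cs,
  dsum B n (map (fun c => (W c, K c)) cs) =
  (alpha n * (fsum cs (fun c => W c * b2R (fB B n (K c) =? 1)%nat) - fsum cs (fun c => W c * b2R (fB B n (K c) =? 0)%nat)),
   alpha n * (fsum cs (fun c => W c * b2R (fB B n (K c) =? 2)%nat) - fsum cs (fun c => W c * b2R (fB B n (K c) =? 0)%nat)),
   alpha n * (fsum cs (fun c => W c * b2R (fB B n (K c) =? 3)%nat) - fsum cs (fun c => W c * b2R (fB B n (K c) =? 0)%nat))).
Proof.
  intros. induction cs as [|c cs IH].
  - unfold vzero, fsum, dsum; simpl. apply pt_eq; ring.
  - rewrite map_cons.
    change (dsum B n ((W c, K c) :: map (fun c => (W c, K c)) cs)) with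
      (vadd (vscale (W c) (delta_col n (fB B n (K c)))) (dsum B n (map (fun c => (W c, K c)) cs))).
    rewrite IH. unfold fsum; simpl.
    assert (Hf : (fB B n (K c) <= 3)%nat) by (destruct (K c) as [[i j] k]; apply bf_le3).
    rewrite (delta_expand n _ Hf). unfold vadd, vscale, cx, cy, cz; simpl. apply pt_eq; ring.
Qed.

Lemma rsum_ext : forall gA gB T x ws, gB = gA ++ T -> Forall (fun w => w < length gA)%nat ws -> rsum gB x ws = rsum gA x ws.
Proof. intros. subst. induction H0; unfold rsum in *; simpl; auto. rewrite IHForall, val_app_lo; auto. Qed.

Lemma fsum_ext : forall cs g h, (forall c, In c cs -> g c = h c) -> fsum cs g = fsum cs h.
Proof. induction cs; intros; unfold fsum; simpl; auto. rewrite H by (left; auto). f_equal. apply IHcs. intros; apply H; right; auto. Qed.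

Lemma fsum_le : forall cs g h, (forall c, g c <= h c) -> fsum cs g <= fsum cs h.
Proof. intros. apply fold_le; auto. Qed.

Lemma fsum_add : forall cs g h, fsum cs g + fsum cs h = fsum cs (fun c => g c + h c).
Proof. induction cs; intros; unfold fsum in *; simpl. ring. rewrite <- IHcs. ring. Qed.

Lemma fsum_zero : forall cs g, (forall c, In c cs -> g c = 0) -> fsum cs g = 0.
Proof. intros. apply fold_zero; auto. Qed.

Lemma fsum_ge0 : forall cs g, (forall c, 0 <= g c) -> 0 <= fsum cs g.
Proof. intros. apply fold_nonneg; auto. Qed.

Lemma b2R_rng : forall b, 0 <= b2R b <= 1.
Proof. destruct b; simpl; lra. Qed.

Opaque coordblk sampleblk combosblk sumblk outblk consts.

Lemma build_ok : forall n B, (1 <= n)%nat -> bcircuit_wf (3 * n) B ->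
  let '(gs, r0, r1, r2) := build n B in
  wfg gs /\ (r0 < length gs)%nat /\ (r1 < length gs)%nat /\ (r2 < length gs)%nat /\
  (length gs <= 1000 * (n + length (bgates B)))%nat /\ keyprop B n (Fof gs r0 r1 r2).
Proof.
  intros n B Hn HB. unfold build.
  destruct (consts_ok n) as (Hc0 & Hw0 & Hl0).
  pose proof (coordblk_spec n 0 (consts n) Hn ltac:(lia) Hc0 Hw0) as C.
  destruct (coordblk n 0 (consts n)) as [[[[[u0 l0] o0] P0] Q0] g1] eqn:E1.
  destruct C as ([t1 Ht1] & Hl1 & Hw1 & Hc1 & Hu0 & Hlm0 & Ho0 & HP0 & HQ0 & V0).
  pose proof (coordblk_spec n 1 g1 Hn ltac:(lia) Hc1 Hw1) as C.
  destruct (coordblk n 1 g1) as [[[[[u1 l1] o1] P1] Q1] g2] eqn:E2.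
  destruct C as ([t2 Ht2] & Hl2 & Hw2 & Hc2 & Hu1 & Hlm1 & Ho1 & HP1 & HQ1 & V1).
  pose proof (coordblk_spec n 2 g2 Hn ltac:(lia) Hc2 Hw2) as C.
  destruct (coordblk n 2 g2) as [[[[[u2 l2] o2] P2] Q2] g3] eqn:E3.
  destruct C as ([t3 Ht3] & Hl3 & Hw3 & Hc3 & Hu2 & Hlm2 & Ho2 & HP2 & HQ2 & V2).
  pose proof (sampleblk_spec n P0 g3 Hn Hc3 Hw3 ltac:(lia)) as S.
  destruct (sampleblk n P0 g3) as [[[zp0 tp0] bp0] g4] eqn:E4.
  destruct S as ([t4 Ht4] & Hl4 & Hw4 & Hc4 & Hzp0 & Htp0 & Hlbp0 & Hbp0 & SP0).
  pose proof (sampleblk_spec n Q0 g4 Hn Hc4 Hw4 ltac:(lia)) as S.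
  destruct (sampleblk n Q0 g4) as [[[zq0 tq0] bq0] g5] eqn:E5.
  destruct S as ([t5 Ht5] & Hl5 & Hw5 & Hc5 & Hzq0 & Htq0 & Hlbq0 & Hbq0 & SQ0).
  pose proof (sampleblk_spec n P1 g5 Hn Hc5 Hw5 ltac:(lia)) as S.
  destruct (sampleblk n P1 g5) as [[[zp1 tp1] bp1] g6] eqn:E6.
  destruct S as ([t6 Ht6] & Hl6 & Hw6 & Hc6 & Hzp1 & Htp1 & Hlbp1 & Hbp1 & SP1).
  pose proof (sampleblk_spec n Q1 g6 Hn Hc6 Hw6 ltac:(lia)) as S.
  destruct (sampleblk n Q1 g6) as [[[zq1 tq1] bq1] g7] eqn:E7.
  destruct S as ([t7 Ht7] & Hl7 & Hw7 & Hc7 & Hzq1 & Htq1 & Hlbq1 & Hbq1 & SQ1).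
  pose proof (sampleblk_spec n P2 g7 Hn Hc7 Hw7 ltac:(lia)) as S.
  destruct (sampleblk n P2 g7) as [[[zp2 tp2] bp2] g8] eqn:E8.
  destruct S as ([t8 Ht8] & Hl8 & Hw8 & Hc8 & Hzp2 & Htp2 & Hlbp2 & Hbp2 & SP2).
  pose proof (sampleblk_spec n Q2 g8 Hn Hc8 Hw8 ltac:(lia)) as S.
  destruct (sampleblk n Q2 g8) as [[[zq2 tq2] bq2] g9] eqn:E9.
  destruct S as ([t9 Ht9] & Hl9 & Hw9 & Hc9 & Hzq2 & Htq2 & Hlbq2 & Hbq2 & SQ2).
  set (sd := sdf (zp0, tp0, bp0) (zq0, tq0, bq0) (zp1, tp1, bp1) (zq1, tq1, bq1) (zp2, tp2, bp2) (zq2, tq2, bq2)).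
  assert (Hsd : forall d b, sdok n g9 (sd d b)).
  { intros d b. unfold sd, sdf, sdok.
    destruct d as [|[|]]; destruct b; repeat split; try lia; intros j Hj;
    [ specialize (Hbq0 j Hj) | specialize (Hbp0 j Hj) | specialize (Hbq1 j Hj) | specialize (Hbp1 j Hj)
    | specialize (Hbq2 j Hj) | specialize (Hbp2 j Hj) ]; lia. }
  pose proof (combosblk_spec n B o0 o1 o2 sd combos g9 Hn HB Hc9 Hw9 ltac:(lia) ltac:(lia) ltac:(lia) Hsd) as CB.
  destruct (combosblk n B o0 o1 o2 sd combos g9) as [ws g10] eqn:E10.
  destruct CB as ([t10 Ht10] & Hl10 & Hw10 & Hc10 & HF).
  assert (Hc10' := hasc_len n g10 Hc10).
  pose proof (sumblk_spec (map (sel 0) ws) i_zero g10 Hw10 ltac:(lia) (cprop_idx _ _ _ _ _ _ _ _ _ _ 0 HF)) as SM.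
  destruct (sumblk i_zero (map (sel 0) ws) g10) as [s0 g11] eqn:E11.
  destruct SM as ([t11 Ht11] & Hl11 & Hw11 & Hs0 & SV0).
  assert (Hws : length ws = 8%nat) by (rewrite <- (Forall2_len _ _ _ HF); reflexivity).
  rewrite length_map, Hws in Hl11.
  pose proof (sumblk_spec (map (sel 1) ws) i_zero g11 Hw11 ltac:(lia)
    ltac:(eapply Forall_impl; [|exact (cprop_idx _ _ _ _ _ _ _ _ _ _ 1 HF)]; simpl; intros; lia)) as SM.
  destruct (sumblk i_zero (map (sel 1) ws) g11) as [s1 g12] eqn:E12.
  destruct SM as ([t12 Ht12] & Hl12 & Hw12 & Hs1 & SV1). rewrite length_map, Hws in Hl12.
  pose proof (sumblk_spec (map (sel 2) ws) i_zero g12 Hw12 ltac:(lia)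
    ltac:(eapply Forall_impl; [|exact (cprop_idx _ _ _ _ _ _ _ _ _ _ 2 HF)]; simpl; intros; lia)) as SM.
  destruct (sumblk i_zero (map (sel 2) ws) g12) as [s2 g13] eqn:E13.
  destruct SM as ([t13 Ht13] & Hl13 & Hw13 & Hs2 & SV2). rewrite length_map, Hws in Hl13.
  pose proof (sumblk_spec (map (sel 3) ws) i_zero g13 Hw13 ltac:(lia)
    ltac:(eapply Forall_impl; [|exact (cprop_idx _ _ _ _ _ _ _ _ _ _ 3 HF)]; simpl; intros; lia)) as SM.
  destruct (sumblk i_zero (map (sel 3) ws) g13) as [s3 g14] eqn:E14.
  destruct SM as ([t14 Ht14] & Hl14 & Hw14 & Hs3 & SV3). rewrite length_map, Hws in Hl14.
  assert (Hc14 : hasc n g14) by (rewrite Ht14, Ht13, Ht12, Ht11; repeat apply hasc_ext; auto).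
  pose proof (outblk_spec n u0 s1 s0 g14 Hn Hc14 Hw14 ltac:(lia) ltac:(lia) ltac:(lia)) as O.
  destruct (outblk n u0 s1 s0 g14) as [r0 g15] eqn:E15.
  destruct O as ([t15 Ht15] & Hl15 & Hw15 & Hc15 & Hr0 & OV0).
  pose proof (outblk_spec n u1 s2 s0 g15 Hn Hc15 Hw15 ltac:(lia) ltac:(lia) ltac:(lia)) as O.
  destruct (outblk n u1 s2 s0 g15) as [r1 g16] eqn:E16.
  destruct O as ([t16 Ht16] & Hl16 & Hw16 & Hc16 & Hr1 & OV1).
  pose proof (outblk_spec n u2 s3 s0 g16 Hn Hc16 Hw16 ltac:(lia) ltac:(lia) ltac:(lia)) as O.
  destruct (outblk n u2 s3 s0 g16) as [r2 g17] eqn:E17.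
  destruct O as ([t17 Ht17] & Hl17 & Hw17 & Hc17 & Hr2 & OV2).
  split; auto. split. lia. split. lia. split. lia.
  split. { simpl in Hl10. lia. }
  intros x Hx.
  pose proof (coord_range x 0 Hx) as R0. pose proof (coord_range x 1 Hx) as R1. pose proof (coord_range x 2 Hx) as R2.
  destruct (coord_main n (coord x 0) Hn R0) as (cp0 & cq0 & Hcp0 & Hcq0 & Dp0 & Dq0 & Rp0 & Rq0 & Lw0 & Hi0 & Ce0).
  destruct (coord_main n (coord x 1) Hn R1) as (cp1 & cq1 & Hcp1 & Hcq1 & Dp1 & Dq1 & Rp1 & Rq1 & Lw1 & Hi1 & Ce1).
  destruct (coord_main n (coord x 2) Hn R2) as (cp2 & cq2 & Hcp2 & Hcq2 & Dp2 & Dq2 & Rp2 & Rq2 & Lw2 & Hi2 & Ce2).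
  set (cub := fun c : bool * bool * bool => let '(bx, by', bz) := c in
         ((if bx then cq0 else cp0), (if by' then cq1 else cp1), (if bz then cq2 else cp2))).
  destruct (V0 x Hx) as (Vu0 & Vl0 & Vo0 & VP0 & VQ0).
  destruct (V1 x Hx) as (Vu1 & Vl1 & Vo1 & VP1 & VQ1).
  destruct (V2 x Hx) as (Vu2 & Vl2 & Vo2 & VP2 & VQ2).
  assert (E91 : exists T, g9 = g1 ++ T).
  { rewrite Ht9, Ht8, Ht7, Ht6, Ht5, Ht4, Ht3, Ht2. rewrite <- !app_assoc. eexists; reflexivity. }
  assert (E92 : exists T, g9 = g2 ++ T).
  { rewrite Ht9, Ht8, Ht7, Ht6, Ht5, Ht4, Ht3. rewrite <- !app_assoc. eexists; reflexivity. }
  assert (E93 : exists T, g9 = g3 ++ T).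
  { rewrite Ht9, Ht8, Ht7, Ht6, Ht5, Ht4. rewrite <- !app_assoc. eexists; reflexivity. }
  assert (E94 : exists T, g9 = g4 ++ T).
  { rewrite Ht9, Ht8, Ht7, Ht6, Ht5. rewrite <- !app_assoc. eexists; reflexivity. }
  assert (E95 : exists T, g9 = g5 ++ T).
  { rewrite Ht9, Ht8, Ht7, Ht6. rewrite <- !app_assoc. eexists; reflexivity. }
  assert (E96 : exists T, g9 = g6 ++ T).
  { rewrite Ht9, Ht8, Ht7. rewrite <- !app_assoc. eexists; reflexivity. }
  assert (E97 : exists T, g9 = g7 ++ T).
  { rewrite Ht9, Ht8. rewrite <- !app_assoc. eexists; reflexivity. }
  assert (E98 : exists T, g9 = g8 ++ T) by (eexists; exact Ht9).
  assert (E31 : exists T, g3 = g1 ++ T) by (rewrite Ht3, Ht2, <- app_assoc; eexists; reflexivity).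
  assert (E32 : exists T, g3 = g2 ++ T) by (eexists; exact Ht3).
  destruct (consts_val n g9 x Hn Hc9) as (Z1 & Z0 & _).
  set (a0 := 1 - lam n (coord x 0)). set (a1 := 1 - lam n (coord x 1)). set (a2 := 1 - lam n (coord x 2)).
  assert (Ho9 : val g9 x o0 = a0 /\ val g9 x o1 = a1 /\ val g9 x o2 = a2).
  { destruct E91 as [T1 ET1], E92 as [T2 ET2], E93 as [T3 ET3].
    rewrite (ext_val _ _ _ x o0 ET1), (ext_val _ _ _ x o1 ET2), (ext_val _ _ _ x o2 ET3) by lia. auto. }
  assert (Hlam : 0 <= a0 <= 1 /\ 0 <= a1 <= 1 /\ 0 <= a2 <= 1).
  { unfold a0, a1, a2, lam. pose proof (trunc01_range (2 * trunc01 (Tp n (coord x 0) - 1 / 4))).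
    pose proof (trunc01_range (2 * trunc01 (Tp n (coord x 1) - 1 / 4))).
    pose proof (trunc01_range (2 * trunc01 (Tp n (coord x 2) - 1 / 4))). lra. }
  assert (Hom : forall c, omc g9 x o0 o1 o2 c = let '(bx, by', bz) := c in om bx by' bz a0 a1 a2).
  { intros [[bx by'] bz]. unfold omc, omv, om, loi, upi.
    destruct Ho9 as (? & ? & ?). destruct bx, by', bz; simpl; rewrite ?Z0, ?Z1, ?H, ?H0, ?H1; reflexivity. }
  assert (E31' : exists T, g4 = g1 ++ T) by (rewrite Ht4, Ht3, Ht2, <- !app_assoc; eexists; reflexivity).
  assert (E32' : exists T, g6 = g2 ++ T) by (rewrite Ht6, Ht5, Ht4, Ht3, <- !app_assoc; eexists; reflexivity).
  assert (E32'' : exists T, g5 = g2 ++ T) by (rewrite Ht5, Ht4, Ht3, <- !app_assoc; eexists; reflexivity).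
  assert (E33 : exists T, g7 = g3 ++ T) by (rewrite Ht7, Ht6, Ht5, Ht4, <- !app_assoc; eexists; reflexivity).
  assert (E33' : exists T, g8 = g3 ++ T) by (rewrite Ht8, Ht7, Ht6, Ht5, Ht4, <- !app_assoc; eexists; reflexivity).
  assert (E3r : exists T, g3 = g3 ++ T) by (exists []; now rewrite app_nil_r).
  assert (E9r : exists T, g9 = g9 ++ T) by (exists []; now rewrite app_nil_r).
  assert (OK4 : sdok n g4 (zp0, tp0, bp0)) by (repeat split; auto).
  assert (OK5 : sdok n g5 (zq0, tq0, bq0)) by (repeat split; auto).
  assert (OK6 : sdok n g6 (zp1, tp1, bp1)) by (repeat split; auto).
  assert (OK7 : sdok n g7 (zq1, tq1, bq1)) by (repeat split; auto).
  assert (OK8 : sdok n g8 (zp2, tp2, bp2)) by (repeat split; auto).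
  assert (OK9 : sdok n g9 (zq2, tq2, bq2)) by (repeat split; auto).
  assert (SX : forall b, Lo b a0 < Up b a0 -> let '(z, t, bs) := sd 0%nat b in sfacts n g9 x z t bs (if b then cq0 else cp0)).
  { intros [] Hb; simpl in Hb; unfold sd, sdf.
    - eapply lift_sfacts with (gP := g1) (gA := g4) (gB := g5) (s := Q0); eauto. apply Dq0. unfold a0 in Hb. lra.
    - eapply lift_sfacts with (gP := g1) (gA := g3) (gB := g4) (s := P0); eauto. apply Dp0. unfold a0 in Hb. lra. }
  assert (SY : forall b, Lo b a1 < Up b a1 -> let '(z, t, bs) := sd 1%nat b in sfacts n g9 x z t bs (if b then cq1 else cp1)).
  { intros [] Hb; simpl in Hb; unfold sd, sdf.
    - eapply lift_sfacts with (gP := g2) (gA := g6) (gB := g7) (s := Q1); eauto. apply Dq1. unfold a1 in Hb. lra.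
    - eapply lift_sfacts with (gP := g2) (gA := g5) (gB := g6) (s := P1); eauto. apply Dp1. unfold a1 in Hb. lra. }
  assert (SZ : forall b, Lo b a2 < Up b a2 -> let '(z, t, bs) := sd 2%nat b in sfacts n g9 x z t bs (if b then cq2 else cp2)).
  { intros [] Hb; simpl in Hb; unfold sd, sdf.
    - eapply lift_sfacts with (gP := g3) (gA := g8) (gB := g9) (s := Q2); eauto. apply Dq2. unfold a2 in Hb. lra.
    - eapply lift_sfacts with (gP := g3) (gA := g7) (gB := g8) (s := P2); eauto. apply Dp2. unfold a2 in Hb. lra. }
  assert (PRE : forall c, In c combos -> cpre n g9 o0 o1 o2 sd x c (cub c)).
  { intros [[bx by'] bz] _. unfold cpre. simpl cub.
    pose proof (SX bx) as SXb. pose proof (SY by') as SYb. pose proof (SZ bz) as SZb.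
    destruct (sd 0%nat bx) as [[zx tx] bsx]. destruct (sd 1%nat by') as [[zy ty] bsy]. destruct (sd 2%nat bz) as [[zz tz] bsz].
    intros Hp. pose proof (Hom (bx, by', bz)) as Ho. unfold omc in Ho. rewrite Ho in Hp.
    destruct (om_pos _ _ _ _ _ _ Hp) as (A & Bq & Cq). split; [|split]; auto. }
  set (W := omc g9 x o0 o1 o2).
  set (Sq := fun q => fsum combos (fun c => W c * b2R (fB B n (cub c) =? q)%nat)).
  assert (HW0 : forall c, 0 <= W c) by (intros [[? ?] ?]; apply Rmax_l).
  assert (HWs : fsum combos W = 1).
  { transitivity (fsum combos (fun c => let '(bx, by', bz) := c in om bx by' bz a0 a1 a2)).
    apply fsum_ext; intros; apply Hom. unfold fsum. apply om_sum; tauto. }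
  assert (HSq : forall q, 0 <= Sq q <= 1).
  { intros q. split. apply fsum_ge0. intros c. pose proof (HW0 c). pose proof (b2R_rng (fB B n (cub c) =? q)%nat). nra.
    rewrite <- HWs. apply fsum_le. intros c. pose proof (HW0 c). pose proof (b2R_rng (fB B n (cub c) =? q)%nat). nra. }
  assert (HS2 : forall q, (q <> 0)%nat -> Sq q + Sq 0%nat <= 1).
  { intros q Hq. unfold Sq. rewrite fsum_add. rewrite <- HWs. apply fsum_le. intros c. pose proof (HW0 c).
    destruct (fB B n (cub c) =? q)%nat eqn:EQa; destruct (fB B n (cub c) =? 0)%nat eqn:EQb; simpl; try nra.
    apply Nat.eqb_eq in EQa, EQb. lia. }
  assert (Hrs : forall q, (q <= 3)%nat -> rsum g10 x (map (sel q) ws) = Sq q).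
  { intros q Hq. unfold Sq, fsum. rewrite (sum_ws n B o0 o1 o2 sd g9 g10 x q cub combos ws Hx HF PRE).
    replace (Nat.min q 3) with q by lia. reflexivity. }
  destruct (consts_val n g10 x Hn Hc10) as (_ & Zz10 & _).
  assert (Hc11 : hasc n g11) by (rewrite Ht11; apply hasc_ext; auto).
  assert (Hc12 : hasc n g12) by (rewrite Ht12; apply hasc_ext; auto).
  assert (Hc13 : hasc n g13) by (rewrite Ht13; apply hasc_ext; auto).
  destruct (consts_val n g11 x Hn Hc11) as (_ & Zz11 & _).
  destruct (consts_val n g12 x Hn Hc12) as (_ & Zz12 & _).
  destruct (consts_val n g13 x Hn Hc13) as (_ & Zz13 & _).
  assert (Hidx : forall q, Forall (fun w => w < length g10)%nat (map (sel q) ws)) by (intros; eapply cprop_idx; eauto).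
  assert (VS : val g14 x s0 = Sq 0%nat /\ val g14 x s1 = Sq 1%nat /\ val g14 x s2 = Sq 2%nat /\ val g14 x s3 = Sq 3%nat).
  { pose proof (HSq 0%nat); pose proof (HSq 1%nat); pose proof (HSq 2%nat); pose proof (HSq 3%nat).
    split; [|split; [|split]].
    - rewrite Ht14, Ht13, Ht12, !val_app_lo by (rewrite ?length_app; lia).
      rewrite SV0; auto. rewrite Zz10, Hrs by lia. ring.
      intros; apply val_range; auto. lra. rewrite Zz10, Hrs by lia. lra.
    - rewrite Ht14, Ht13, !val_app_lo by (rewrite ?length_app; lia).
      specialize (SV1 x Hx). rewrite (rsum_ext g10 g11 t11) in SV1 by auto. rewrite SV1; auto. rewrite Zz11, Hrs by lia. ring.
      intros; apply val_range; auto. lra. rewrite Zz11, Hrs by lia. lra.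
    - rewrite Ht14, !val_app_lo by (rewrite ?length_app; lia).
      assert (E : exists T, g12 = g10 ++ T) by (rewrite Ht12, Ht11, <- app_assoc; eexists; reflexivity).
      destruct E as [T ET]. specialize (SV2 x Hx). rewrite (rsum_ext g10 g12 T) in SV2 by auto. rewrite SV2; auto. rewrite Zz12, Hrs by lia. ring.
      intros; apply val_range; auto. lra. rewrite Zz12, Hrs by lia. lra.
    - assert (E : exists T, g13 = g10 ++ T) by (rewrite Ht13, Ht12, Ht11, <- !app_assoc; eexists; reflexivity).
      destruct E as [T ET]. specialize (SV3 x Hx). rewrite (rsum_ext g10 g13 T) in SV3 by auto. rewrite SV3; auto. rewrite Zz13, Hrs by lia. ring.
      intros; apply val_range; auto. lra. rewrite Zz13, Hrs by lia. lra. }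
  destruct VS as (VS0 & VS1 & VS2 & VS3).
  pose proof (alpha_le n Hn) as Hal.
  assert (HM1 : (1 <= 2 ^ n - 1)%nat) by (assert (2 ^ 1 <= 2 ^ n)%nat by (apply Nat.pow_le_mono_r; lia); simpl in *; lia).
  assert (Hf : forall c, fB B n (cub c) = brouwer_f B n (if fst (fst c) then cq0 else cp0)
                   (if snd (fst c) then cq1 else cp1) (if snd c then cq2 else cp2)).
  { intros [[bx by'] bz]. reflexivity. }
  assert (Zero : forall q, (forall c, fB B n (cub c) <> q) -> Sq q = 0).
  { intros q Hq. apply fsum_zero. intros c _. specialize (Hq c). apply Nat.eqb_neq in Hq. rewrite Hq. simpl. ring. }
  assert (Bd0 : 0 <= coord x 0 + alpha n * (Sq 1%nat - Sq 0%nat) <= 1).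
  { pose proof (HSq 0%nat); pose proof (HSq 1%nat); pose proof (HS2 1%nat ltac:(lia)).
    destruct (Rlt_dec (coord x 0) (alpha n)) as [L|L].
    - destruct (Lw0 L) as [-> ->]. rewrite (Zero 0%nat). nra.
      intros c. rewrite Hf. destruct (fst (fst c)); rewrite bf_i0; lia.
    - destruct (Rlt_dec (1 - alpha n) (coord x 0)) as [L'|L'].
      + destruct (Hi0 L') as [-> ->]. rewrite (Zero 1%nat). nra.
        intros c. rewrite Hf. destruct (fst (fst c)); apply bf_iM; auto.
      + nra. }
  assert (Bd1 : 0 <= coord x 1 + alpha n * (Sq 2%nat - Sq 0%nat) <= 1).
  { pose proof (HSq 0%nat); pose proof (HSq 2%nat); pose proof (HS2 2%nat ltac:(lia)).
    destruct (Rlt_dec (coord x 1) (alpha n)) as [L|L].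
    - destruct (Lw1 L) as [-> ->]. rewrite (Zero 0%nat). nra.
      intros c. rewrite Hf. destruct (snd (fst c)); apply bf_j0.
    - destruct (Rlt_dec (1 - alpha n) (coord x 1)) as [L'|L'].
      + destruct (Hi1 L') as [-> ->]. rewrite (Zero 2%nat). nra.
        intros c. rewrite Hf. destruct (snd (fst c)); apply bf_jM; auto.
      + nra. }
  assert (Bd2 : 0 <= coord x 2 + alpha n * (Sq 3%nat - Sq 0%nat) <= 1).
  { pose proof (HSq 0%nat); pose proof (HSq 3%nat); pose proof (HS2 3%nat ltac:(lia)).
    destruct (Rlt_dec (coord x 2) (alpha n)) as [L|L].
    - destruct (Lw2 L) as [-> ->]. rewrite (Zero 0%nat). nra.
      intros c. rewrite Hf. destruct (snd c); apply bf_k0.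
    - destruct (Rlt_dec (1 - alpha n) (coord x 2)) as [L'|L'].
      + destruct (Hi2 L') as [-> ->]. rewrite (Zero 3%nat). nra.
        intros c. rewrite Hf. destruct (snd c); apply bf_kM; auto.
      + nra. }
  assert (U0 : val g14 x u0 = coord x 0).
  { rewrite <- Vu0. apply ext_val with (t := t2 ++ t3 ++ t4 ++ t5 ++ t6 ++ t7 ++ t8 ++ t9 ++ t10 ++ t11 ++ t12 ++ t13 ++ t14); [|lia].
    rewrite Ht14, Ht13, Ht12, Ht11, Ht10, Ht9, Ht8, Ht7, Ht6, Ht5, Ht4, Ht3, Ht2. rewrite <- !app_assoc. reflexivity. }
  assert (U1 : val g14 x u1 = coord x 1).
  { rewrite <- Vu1. apply ext_val with (t := t3 ++ t4 ++ t5 ++ t6 ++ t7 ++ t8 ++ t9 ++ t10 ++ t11 ++ t12 ++ t13 ++ t14); [|lia].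
    rewrite Ht14, Ht13, Ht12, Ht11, Ht10, Ht9, Ht8, Ht7, Ht6, Ht5, Ht4, Ht3. rewrite <- !app_assoc. reflexivity. }
  assert (U2 : val g14 x u2 = coord x 2).
  { rewrite <- Vu2. apply ext_val with (t := t4 ++ t5 ++ t6 ++ t7 ++ t8 ++ t9 ++ t10 ++ t11 ++ t12 ++ t13 ++ t14); [|lia].
    rewrite Ht14, Ht13, Ht12, Ht11, Ht10, Ht9, Ht8, Ht7, Ht6, Ht5, Ht4. rewrite <- !app_assoc. reflexivity. }
  assert (F0 : val g17 x r0 = coord x 0 + alpha n * (Sq 1%nat - Sq 0%nat)).
  { rewrite Ht17, Ht16, !val_app_lo by (rewrite ?length_app; lia).
    rewrite <- U0, <- VS1, <- VS0. apply OV0; auto; try (apply val_range; auto). rewrite U0, VS1, VS0; auto. }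
  assert (F1 : val g17 x r1 = coord x 1 + alpha n * (Sq 2%nat - Sq 0%nat)).
  { rewrite Ht17, !val_app_lo by (rewrite ?length_app; lia).
    assert (G : forall p, (p < length g14)%nat -> val g15 x p = val g14 x p) by (intros; rewrite Ht15; apply val_app_lo; auto).
    rewrite <- U1, <- VS2, <- VS0, <- !G by lia. apply OV1; auto; try (apply val_range; auto).
    rewrite !G by lia. rewrite U1, VS2, VS0; auto. }
  assert (F2 : val g17 x r2 = coord x 2 + alpha n * (Sq 3%nat - Sq 0%nat)).
  { assert (G : forall p, (p < length g14)%nat -> val g16 x p = val g14 x p)
      by (intros; rewrite Ht16, Ht15, <- app_assoc; apply val_app_lo; auto).
    rewrite <- U2, <- VS3, <- VS0, <- !G by lia. apply OV2; auto; try (apply val_range; auto).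
    rewrite !G by lia. rewrite U2, VS3, VS0; auto. }
  exists (map (fun c => (W c, cub c)) combos).
  split; [|split; [|split]].
  - intros w c Hin. apply in_map_iff in Hin as (c' & Heq & _). inversion Heq; subst w c. clear Heq.
    split. apply HW0. destruct c' as [[bx by'] bz]. simpl cub. split.
    + destruct bx, by', bz; repeat split; auto.
    + unfold cen, center, dist_inf, cx, cy, cz; simpl.
      apply Rmax_lub; [|apply Rmax_lub]; [destruct bx|destruct by'|destruct bz]; auto.
  - unfold wsum. rewrite <- HWs. unfold fsum. clear. induction combos; simpl; auto. rewrite IHl. reflexivity.
  - unfold Fof. rewrite F0, F1, F2. rewrite dsum_map. unfold vsub, coord. unfold cx, cy, cz. cbn [fst snd]. apply pt_eq; unfold Sq; ring.
  - intros i j k Hxc w c Hin. apply in_map_iff in Hin as (c' & Heq & _). inversion Heq; subst w c. clear Heq.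
    assert (Q0' : coord x 0 = (INR i + /2) / 2 ^ n) by (rewrite Hxc; reflexivity).
    assert (Q1' : coord x 1 = (INR j + /2) / 2 ^ n) by (rewrite Hxc; reflexivity).
    assert (Q2' : coord x 2 = (INR k + /2) / 2 ^ n) by (rewrite Hxc; reflexivity).
    destruct (Ce0 i Q0') as [-> ->]. destruct (Ce1 j Q1') as [-> ->]. destruct (Ce2 k Q2') as [-> ->].
    destruct c' as [[bx by'] bz]. simpl. destruct bx, by', bz; reflexivity.
Qed.

Theorem theorem2 :
  exists a b : nat,
    forall (n : nat) (B : bcircuit),
      (1 <= n)%nat ->
      bcircuit_wf (3 * n) B ->
      exists (C : lcircuit) (F : pt -> pt),
        lcircuit_wf C /\
        (length (lgates C) <= a * (n + length (bgates B)) ^ b)%nat /\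
        (forall x, inK x -> inK (F x)) /\
        continuous_on_K F /\
        lcomputes C F /\
        implements B n F.
Proof.
  exists 1000%nat, 1%nat. intros n B Hn HB.
  pose proof (build_ok n B Hn HB) as BO.
  destruct (build n B) as [[[gs r0] r1] r2].
  destruct BO as (Hw & H0 & H1 & H2 & Hlen & Hkey).
  exists (lcirc gs r0 r1 r2), (Fof gs r0 r1 r2).
  destruct (generic_props gs r0 r1 r2 Hw H0 H1 H2) as (A & Bb & Cc & D).
  split; auto. split. simpl. lia.
  split; auto. split; auto. split; auto. apply key_implements; auto.
Qed.
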